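(* Assume $B$ is non-decreasing and unbounded. Then $H$ is local $\delta$-admissible on $\mathcal{X}$ with $\delta(t)=1/\sqrt{B(t)}$; that is, for every $\varepsilon>0$ there exist $\eta>0$ and $t_0(\varepsilon)$ such that for all $t\in\mathcal{X}$ with $t>t_0(\varepsilon)$ and all complex $w$ with $|w|\le\eta/\sqrt{B(t)}$, \[ \log\frac{H(t+w)}{H(t)}=wA(t)+\tfrac12w^2B(t)+h_t(w),\qquad |h_t(w)|\le\varepsilon|w|^2B(t). \]
   Context: Let $G(z)=\sum_{n\ge0}a_n^2z^n$ be an entire function with $a_n\ge0$, infinitely many non-zero. Put $H(t)=G(e^t)$, $A=H'/H$, $B=A'$. Choose points $t_\ell\uparrow\infty$ with $B(t_\ell)=\ell^6$ (for all $\ell$ for which this is possible) and $T_\ell=[t_\ell,t_{\ell+1}]$; $T_\ell$ is long if $t_{\ell+1}-t_\ell\ge8/\ell^2$, with interior $\mathring T_\ell=[t_\ell+2/\ell^2,\,t_{\ell+1}-2/\ell^2]$. The set of normal values is $\mathcal{X}=\bigcup_{T_\ell\text{ long}}\mathring T_\ell$. The logarithm is the branch analytic in $w$ and vanishing at $w=0$. *)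

(* Defs.v *)
From Stdlib Require Import Reals.
From Coquelicot Require Import Coquelicot.
Open Scope R_scope.

Definition Cexp (z : C) : C := (exp (Re z) * cos (Im z), exp (Re z) * sin (Im z)).

Definition coefG (a : nat -> R) : nat -> R := fun n => (a n) ^ 2.
Definition Hf (a : nat -> R) (t : R) : R := PSeries (coefG a) (exp t).
Definition Af (a : nat -> R) (t : R) : R := Derive (Hf a) t / Hf a t.
Definition Bf (a : nat -> R) (t : R) : R := Derive (Af a) t.

Definition is_long (tl : nat -> R) (l : nat) : Prop :=
  tl (S l) - tl l >= 8 / (INR l) ^ 2.

Definition in_interior (tl : nat -> R) (l : nat) (t : R) : Prop :=
  tl l + 2 / (INR l) ^ 2 <= t <= tl (S l) - 2 / (INR l) ^ 2.

(* Normal values X: union of the interiors of the long T_l, l >= l0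
   (l0 is the first index for which B(t) = l^6 is solvable). *)
Definition normal_values (tl : nat -> R) (l0 : nat) (t : R) : Prop :=
  exists l, (l0 <= l)%nat /\ is_long tl l /\ in_interior tl l t.

(* Main.v *)
Require Import Defs.
From Stdlib Require Import Reals Lra Lia.
From Coquelicot Require Import Coquelicot.
Open Scope R_scope.

Lemma exp_INR_mul (n : nat) (s : R) : exp (INR n * s) = exp s ^ n.
Proof.
  induction n as [|n IH].
  - simpl. rewrite Rmult_0_l, exp_0; reflexivity.
  - rewrite S_INR, Rmult_plus_distr_r, Rmult_1_l, exp_plus, IH.
    change (exp s ^ S n) with (exp s * exp s ^ n). ring.
Qed.

Lemma is_series_shift0 (a : nat -> R) l :
  a 0%nat = 0 -> is_series (fun k => a (S k)) l -> is_series a l.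
Proof.
  intros h0 h. apply is_series_decr_1. rewrite h0.
  eapply is_series_ext; [intros; reflexivity|].
  match goal with |- is_series _ ?v => replace v with l end. exact h.
  change (l = Rplus l (Ropp 0)). rewrite Ropp_0. symmetry; apply Rplus_0_r.
Qed.

Definition cN (c : nat -> R) (n : nat) : R := INR n * c n.
Definition Ef (c : nat -> R) (s : R) : R := PSeries c (exp s).

Lemma cN_radius c : CV_radius c = p_infty -> CV_radius (cN c) = p_infty.
Proof.
  intros h.
  rewrite (CV_radius_ext (cN c) (PS_incr_1 (PS_derive c))).
  - rewrite CV_radius_incr_1, CV_radius_derive; exact h.
  - intros [|n]; unfold cN, PS_incr_1, PS_derive; [simpl; unfold zero; simpl; ring|reflexivity].
Qed.

Lemma Ef_series c (hc : CV_radius c = p_infty) s :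
  is_series (fun n => c n * exp s ^ n) (Ef c s).
Proof.
  unfold Ef.
  assert (H := PSeries_correct c (exp s)
    (CV_radius_inside c (exp s) ltac:(rewrite hc; exact I))).
  unfold is_pseries in H.
  eapply is_series_ext; [|exact H].
  intros n; simpl. rewrite pow_n_pow. unfold scal; simpl. unfold mult; simpl. ring.
Qed.

Lemma Ef_derive c (hc : CV_radius c = p_infty) s :
  is_derive (Ef c) s (Ef (cN c) s).
Proof.
  unfold Ef.
  assert (Hd := is_derive_PSeries c (exp s) ltac:(rewrite hc; exact I)).
  assert (Hc := is_derive_comp (PSeries c) exp s _ _ Hd (is_derive_exp s)).
  replace (PSeries (cN c) (exp s)) with (scal (exp s) (PSeries (PS_derive c) (exp s))).
  exact Hc.
  symmetry. apply is_series_unique.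
  assert (H1 := PSeries_correct (PS_derive c) (exp s)
    (CV_radius_inside _ (exp s) ltac:(rewrite CV_radius_derive, hc; exact I))).
  unfold is_pseries in H1.
  apply (is_series_scal (exp s)) in H1.
  apply is_series_shift0. unfold cN; simpl; ring.
  eapply is_series_ext; [|exact H1].
  intros n. simpl. rewrite pow_n_pow. unfold scal; simpl; unfold mult; simpl.
  unfold cN, PS_derive. ring.
Qed.

Lemma sum_n_R_S (u : nat -> R) n : sum_n u (S n) = sum_n u n + u (S n).
Proof. rewrite sum_Sn. reflexivity. Qed.

Lemma sum_n_le_R (u v : nat -> R) : (forall n, u n <= v n) -> forall N, sum_n u N <= sum_n v N.
Proof.
  intros h N; induction N as [|N IH].
  - rewrite !sum_O; apply h.
  - rewrite !sum_n_R_S. specialize (h (S N)). lra.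
Qed.

Lemma is_series_le_R (u v : nat -> R) (lu lv : R) :
  is_series u lu -> is_series v lv -> (forall n, u n <= v n) -> lu <= lv.
Proof.
  intros hu hv h.
  assert (H := is_lim_seq_le (sum_n u) (sum_n v) lu lv (sum_n_le_R u v h) hu hv).
  exact H.
Qed.

Lemma is_series_plus_R (u v : nat -> R) (a b : R) :
  is_series u a -> is_series v b -> is_series (fun n => u n + v n) (a + b).
Proof. intros hu hv. exact (is_series_plus u v a b hu hv). Qed.

Lemma is_series_scal_R (u : nat -> R) (a k : R) :
  is_series u a -> is_series (fun n => k * u n) (k * a).
Proof. intros hu. exact (is_series_scal k u a hu). Qed.

Lemma is_series_opp_R (u : nat -> R) (a : R) :
  is_series u a -> is_series (fun n => - u n) (- a).
Proof. intros hu. exact (is_series_opp u a hu). Qed.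

Lemma is_series_minus_R (u v : nat -> R) (a b : R) :
  is_series u a -> is_series v b -> is_series (fun n => u n - v n) (a - b).
Proof. intros hu hv. apply is_series_plus_R; [exact hu|]. apply is_series_opp_R; exact hv. Qed.

Lemma is_series_ext_R (u v : nat -> R) (a b : R) :
  (forall n, u n = v n) -> a = b -> is_series u a -> is_series v b.
Proof. intros h e hu; subst b. exact (is_series_ext u v a h hu). Qed.

Lemma is_series_abs_le (u w : nat -> R) (lu lw : R) :
  is_series u lu -> is_series w lw -> (forall n, Rabs (u n) <= w n) -> Rabs lu <= lw.
Proof.
  intros hu hw h.
  assert (h1 := is_series_le_R u w lu lw hu hw (fun n => Rle_trans _ _ _ (Rle_abs _) (h n))).
  assert (h2 := is_series_le_R (fun n => - w n) u (- lw) lu (is_series_opp_R _ _ hw) hu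
     (fun n => ltac:(specialize (h n); rewrite Rabs_le_between in h; lra))).
  apply Rabs_le; lra.
Qed.

Lemma sum_n_nonneg (u : nat -> R) : (forall n, 0 <= u n) -> forall N, 0 <= sum_n u N.
Proof.
  intros h N; induction N as [|N IH].
  - rewrite sum_O; apply h.
  - rewrite sum_n_R_S. specialize (h (S N)). lra.
Qed.

Lemma sum_n_mono (u : nat -> R) : (forall n, 0 <= u n) -> forall N k, sum_n u N <= sum_n u (k + N).
Proof.
  intros h N k; induction k as [|k IH].
  - simpl; lra.
  - change (S k + N)%nat with (S (k + N)). rewrite sum_n_R_S. specialize (h (S (k + N))). lra.
Qed.

Lemma is_series_partial_le (u : nat -> R) (l : R) :
  is_series u l -> (forall n, 0 <= u n) -> forall N, sum_n u N <= l.
Proof.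
  intros hu h N.
  assert (hl : is_lim_seq (fun n => sum_n u (n + N)%nat) l).
  { apply (is_lim_seq_incr_n (sum_n u) N l). exact hu. }
  assert (H := is_lim_seq_le (fun _ => sum_n u N) (fun n => sum_n u (n + N)%nat) (sum_n u N) l
    (fun n => sum_n_mono u h N n) (is_lim_seq_const _) hl).
  exact H.
Qed.

Lemma sum_n_ge_term (u : nat -> R) : (forall n, 0 <= u n) -> forall N, u N <= sum_n u N.
Proof.
  intros h [|N].
  - rewrite sum_O; lra.
  - rewrite sum_n_R_S. assert (H := sum_n_nonneg u h N). lra.
Qed.

Lemma sum_n_ge_two (u : nat -> R) : (forall n, 0 <= u n) -> forall n1 n2, (n1 < n2)%nat ->
  u n1 + u n2 <= sum_n u n2.
Proof.
  intros h n1 n2 hlt. destruct n2 as [|m]; [lia|].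
  rewrite sum_n_R_S.
  assert (u n1 <= sum_n u m).
  { replace m with ((m - n1) + n1)%nat by lia.
    eapply Rle_trans; [apply sum_n_ge_term; exact h|]. apply sum_n_mono; exact h. }
  lra.
Qed.

Lemma coefG_nonneg a n : 0 <= coefG a n.
Proof. unfold coefG. simpl. rewrite Rmult_1_r. apply Rle_0_sqr. Qed.

Lemma coefG_pos a n : a n <> 0 -> 0 < coefG a n.
Proof. intros h. unfold coefG. simpl. rewrite Rmult_1_r. apply Rsqr_pos_lt; exact h. Qed.

Lemma Hf_series a (hc : CV_radius (coefG a) = p_infty) s :
  is_series (fun n => coefG a n * exp s ^ n) (Hf a s).
Proof. exact (Ef_series _ hc s). Qed.

Lemma Hf_pos a (hc : CV_radius (coefG a) = p_infty) (hex : exists n, a n <> 0) s :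
  0 < Hf a s.
Proof.
  destruct hex as [n hn].
  assert (h0 : forall k, 0 <= coefG a k * exp s ^ k).
  { intros k. apply Rmult_le_pos; [apply coefG_nonneg|apply pow_le; apply Rlt_le, exp_pos]. }
  assert (h1 := is_series_partial_le _ _ (Hf_series a hc s) h0 n).
  assert (h2 := sum_n_ge_term _ h0 n).
  assert (h3 : 0 < coefG a n * exp s ^ n).
  { apply Rmult_lt_0_compat; [apply coefG_pos; exact hn|apply pow_lt, exp_pos]. }
  lra.
Qed.

Definition S1f a s := Ef (cN (coefG a)) s.
Definition S2f a s := Ef (cN (cN (coefG a))) s.

Lemma Hf_derive a (hc : CV_radius (coefG a) = p_infty) s :
  is_derive (Hf a) s (S1f a s).
Proof. exact (Ef_derive _ hc s). Qed.

Lemma S1f_derive a (hc : CV_radius (coefG a) = p_infty) s :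
  is_derive (S1f a) s (S2f a s).
Proof. exact (Ef_derive _ (cN_radius _ hc) s). Qed.

Lemma Af_eq a (hc : CV_radius (coefG a) = p_infty) s : Af a s = S1f a s / Hf a s.
Proof. unfold Af. rewrite (is_derive_unique _ _ _ (Hf_derive a hc s)). reflexivity. Qed.

Lemma Af_derive a (hc : CV_radius (coefG a) = p_infty) (hex : exists n, a n <> 0) s :
  is_derive (Af a) s ((S2f a s * Hf a s - S1f a s * S1f a s) / Hf a s ^ 2).
Proof.
  apply (is_derive_ext (fun s => S1f a s / Hf a s)).
  { intros x; rewrite Af_eq; auto. }
  apply is_derive_div.
  - apply S1f_derive; exact hc.
  - apply Hf_derive; exact hc.
  - apply Rgt_not_eq, Hf_pos; auto.
Qed.

Lemma Bf_eq a (hc : CV_radius (coefG a) = p_infty) (hex : exists n, a n <> 0) s :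
  Bf a s = (S2f a s * Hf a s - S1f a s * S1f a s) / Hf a s ^ 2.
Proof. unfold Bf. apply is_derive_unique, Af_derive; auto. Qed.

Lemma Af_derive' a (hc : CV_radius (coefG a) = p_infty) (hex : exists n, a n <> 0) s :
  is_derive (Af a) s (Bf a s).
Proof. rewrite Bf_eq; auto. apply Af_derive; auto. Qed.

Lemma lnH_derive a (hc : CV_radius (coefG a) = p_infty) (hex : exists n, a n <> 0) s :
  is_derive (fun x => ln (Hf a x)) s (Af a s).
Proof.
  assert (h := is_derive_comp ln (Hf a) s _ _ (is_derive_ln _ (Hf_pos a hc hex s)) (Hf_derive a hc s)).
  rewrite Af_eq; auto.
Qed.

Lemma ser_ext (u v : nat -> R) (a b : R) :
  is_series u a -> (forall n, u n = v n) -> a = b -> is_series v b.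
Proof. intros hu h e. exact (is_series_ext_R u v a b h e hu). Qed.

Lemma S1_series a (hc : CV_radius (coefG a) = p_infty) s :
  is_series (fun n => INR n * (coefG a n * exp s ^ n)) (S1f a s).
Proof.
  apply (ser_ext _ _ _ _ (Ef_series _ (cN_radius _ hc) s)); [|reflexivity].
  intros n; unfold cN; ring.
Qed.

Lemma S2_series a (hc : CV_radius (coefG a) = p_infty) s :
  is_series (fun n => INR n ^ 2 * (coefG a n * exp s ^ n)) (S2f a s).
Proof.
  apply (ser_ext _ _ _ _ (Ef_series _ (cN_radius _ (cN_radius _ hc)) s)); [|reflexivity].
  intros n; unfold cN; ring.
Qed.

Definition pw a t n := coefG a n * exp t ^ n / Hf a t.

Lemma pw_nonneg a (hc : CV_radius (coefG a) = p_infty) (hex : exists n, a n <> 0) t n :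
  0 <= pw a t n.
Proof.
  unfold pw. apply Rmult_le_pos; [apply Rmult_le_pos|].
  - apply coefG_nonneg.
  - apply pow_le, Rlt_le, exp_pos.
  - apply Rlt_le, Rinv_0_lt_compat, Hf_pos; auto.
Qed.

Lemma M0 a (hc : CV_radius (coefG a) = p_infty) (hex : exists n, a n <> 0) t :
  is_series (pw a t) 1.
Proof.
  assert (hH := Hf_pos a hc hex t).
  apply (ser_ext _ _ _ _ (is_series_scal_R _ _ (/ Hf a t) (Hf_series a hc t))).
  - intros n; unfold pw; field; lra.
  - field; lra.
Qed.

Lemma M1 a (hc : CV_radius (coefG a) = p_infty) (hex : exists n, a n <> 0) t :
  is_series (fun n => pw a t n * (INR n - Af a t)) 0.
Proof.
  assert (hH := Hf_pos a hc hex t).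
  assert (h := is_series_minus_R _ _ _ _
     (is_series_scal_R _ _ (/ Hf a t) (S1_series a hc t))
     (is_series_scal_R _ _ (Af a t / Hf a t) (Hf_series a hc t))).
  apply (ser_ext _ _ _ _ h).
  - intros n; unfold pw; field; lra.
  - rewrite Af_eq; auto. field; lra.
Qed.

Lemma M2 a (hc : CV_radius (coefG a) = p_infty) (hex : exists n, a n <> 0) t :
  is_series (fun n => pw a t n * (INR n - Af a t) ^ 2) (Bf a t).
Proof.
  assert (hH := Hf_pos a hc hex t).
  assert (h := is_series_plus_R _ _ _ _ (is_series_minus_R _ _ _ _
     (is_series_scal_R _ _ (/ Hf a t) (S2_series a hc t))
     (is_series_scal_R _ _ (2 * Af a t / Hf a t) (S1_series a hc t)))
     (is_series_scal_R _ _ (Af a t ^ 2 / Hf a t) (Hf_series a hc t))).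
  apply (ser_ext _ _ _ _ h).
  - intros n; unfold pw; field; lra.
  - rewrite Bf_eq, Af_eq; auto. field; lra.
Qed.

Lemma Ms a (hc : CV_radius (coefG a) = p_infty) (hex : exists n, a n <> 0) t s :
  is_series (fun n => pw a t n * exp ((INR n - Af a t) * s))
    (exp (- Af a t * s) * Hf a (t + s) / Hf a t).
Proof.
  assert (hH := Hf_pos a hc hex t).
  assert (h := is_series_scal_R _ _ (exp (- Af a t * s) / Hf a t) (Hf_series a hc (t + s))).
  apply (ser_ext _ _ _ _ h).
  - intros n; unfold pw.
    replace ((INR n - Af a t) * s) with (INR n * s + (- Af a t * s)) by ring.
    rewrite !exp_plus, exp_INR_mul, Rpow_mult_distr. field; lra.
  - field; lra.
Qed.

Lemma Bf_pos a (hc : CV_radius (coefG a) = p_infty) (hinf : forall N : nat, exists n, (N <= n)%nat /\ a n <> 0) t :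
  0 < Bf a t.
Proof.
  destruct (hinf 0%nat) as [n1 [_ h1]].
  destruct (hinf (S n1)) as [n2 [hn2 h2]].
  assert (hex : exists n, a n <> 0) by (exists n1; exact h1).
  set (u := fun n => pw a t n * (INR n - Af a t) ^ 2).
  assert (hu : forall n, 0 <= u n).
  { intros n; unfold u. apply Rmult_le_pos; [apply pw_nonneg; auto|]. apply pow2_ge_0. }
  assert (hs := is_series_partial_le _ _ (M2 a hc hex t) hu n2).
  assert (ht := sum_n_ge_two u hu n1 n2 ltac:(lia)).
  assert (hH := Hf_pos a hc hex t).
  assert (hp1 : 0 < pw a t n1).
  { unfold pw. apply Rmult_lt_0_compat; [apply Rmult_lt_0_compat|].
    apply coefG_pos; auto. apply pow_lt, exp_pos. apply Rinv_0_lt_compat; auto. }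
  assert (hp2 : 0 < pw a t n2).
  { unfold pw. apply Rmult_lt_0_compat; [apply Rmult_lt_0_compat|].
    apply coefG_pos; auto. apply pow_lt, exp_pos. apply Rinv_0_lt_compat; auto. }
  assert (hne : INR n1 <> INR n2) by (apply not_INR; lia).
  assert (0 < u n1 + u n2).
  { unfold u.
    destruct (Req_dec (INR n1) (Af a t)) as [e|e].
      assert (0 < (INR n2 - Af a t) ^ 2).
      { replace ((INR n2 - Af a t) ^ 2) with (Rsqr (INR n2 - Af a t)) by (unfold Rsqr; ring).
        apply Rsqr_pos_lt. lra. }
      assert (0 <= pw a t n1 * (INR n1 - Af a t) ^ 2) by (apply Rmult_le_pos; [lra|apply pow2_ge_0]).
      assert (0 < pw a t n2 * (INR n2 - Af a t) ^ 2) by (apply Rmult_lt_0_compat; lra).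
      lra.
    - assert (0 < (INR n1 - Af a t) ^ 2).
      { replace ((INR n1 - Af a t) ^ 2) with (Rsqr (INR n1 - Af a t)) by (unfold Rsqr; ring).
        apply Rsqr_pos_lt. lra. }
      assert (0 <= pw a t n2 * (INR n2 - Af a t) ^ 2) by (apply Rmult_le_pos; [lra|apply pow2_ge_0]).
      assert (0 < pw a t n1 * (INR n1 - Af a t) ^ 2) by (apply Rmult_lt_0_compat; lra).
      lra. }
  change (sum_n u n2 <= Bf a t) in hs. lra.
Qed.



Lemma psi_derive a (hc : CV_radius (coefG a) = p_infty) (hex : exists n, a n <> 0) t y :
  is_derive (fun y => ln (Hf a y) - y * Af a t) y (Af a y - Af a t).
Proof.
  assert (h1 := lnH_derive a hc hex y).
  assert (h2 : is_derive (fun y : R => y * Af a t) y (1 * Af a t)).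
  { auto_derive; [exact I| ring]. }
  assert (h := is_derive_minus _ _ _ _ _ h1 h2).
  replace (Af a y - Af a t) with (minus (Af a y) (1 * Af a t)).
  exact h.
  unfold minus, plus, opp; simpl. ring.
Qed.

Lemma mgf_bound a (hc : CV_radius (coefG a) = p_infty)
  (hinf : forall N : nat, exists n, (N <= n)%nat /\ a n <> 0) t K d :
  (forall x, Rabs x <= d -> Bf a (t + x) <= K) ->
  forall s, Rabs s <= d ->
  exp (- Af a t * s) * Hf a (t + s) / Hf a t <= exp (K * s ^ 2).
Proof.
  intros hB s hs.
  assert (hex : exists n, a n <> 0).
  { destruct (hinf 0%nat) as [n [_ hn]]; exists n; exact hn. }
  assert (hH := Hf_pos a hc hex t). assert (hH2 := Hf_pos a hc hex (t + s)).
  destruct (MVT_cor4 (fun y => ln (Hf a y) - y * Af a t) (fun y => Af a y - Af a t) t (Rabs s)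
     (fun c _ => psi_derive a hc hex t c) (t + s) ltac:(replace (t + s - t) with s by ring; lra))
     as [xi [e1 e2]].
  destruct (MVT_cor4 (Af a) (Bf a) t (Rabs s)
     (fun c _ => Af_derive' a hc hex c) xi ltac:(replace (t + s - t) with s in e2 by ring; lra))
     as [xi2 [f1 f2]].
  replace (t + s - t) with s in e2, e1 by ring.
  assert (hB2 : Bf a xi2 <= K).
  { replace xi2 with (t + (xi2 - t)) by ring. apply hB. lra. }
  assert (hB3 := Bf_pos a hc hinf xi2).
  assert (key : ln (Hf a (t + s)) - ln (Hf a t) - s * Af a t <= K * s ^ 2).
  { assert (E : ln (Hf a (t + s)) - ln (Hf a t) - s * Af a t = s * (xi - t) * Bf a xi2).
    { rewrite f1 in e1. lra. }
    rewrite E.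
    assert (Rabs (s * (xi - t)) <= s ^ 2).
    { rewrite Rabs_mult. replace (s ^ 2) with (Rabs s * Rabs s).
      apply Rmult_le_compat_l; [apply Rabs_pos|lra].
      rewrite <- Rabs_mult. rewrite Rabs_right. ring. nra. }
    assert (s * (xi - t) <= s ^ 2) by (eapply Rle_trans; [apply Rle_abs|lra]).
    assert (0 <= s ^ 2) by nra.
    destruct (Rle_lt_dec 0 (s * (xi - t))).
    - eapply Rle_trans. apply Rmult_le_compat_l; [lra|exact hB2]. nra.
    - nra. }
  replace (exp (- Af a t * s) * Hf a (t + s) / Hf a t)
    with (exp (ln (Hf a (t + s)) - ln (Hf a t) - s * Af a t)).
  - apply exp_le_3 || (destruct (Rle_lt_or_eq_dec _ _ key) as [hl|he]; [left; apply exp_increasing; exact hl| right; rewrite he; reflexivity]).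
  - unfold Rminus. rewrite !exp_plus, exp_Ropp, !exp_ln by lra.
    replace (- (s * Af a t)) with (- Af a t * s) by ring. field. lra.
Qed.

Lemma step_bound (f d : R -> R) (M : R) (k : nat) :
  f 0 = 0 -> (forall x, is_derive f x (d x)) ->
  (forall x, 0 <= x <= 1 -> Rabs (d x) <= M * x ^ k) ->
  forall x, 0 <= x <= 1 -> Rabs (f x) <= M * x ^ (S k).
Proof.
  intros h0 hd hM x hx.
  destruct (Req_dec x 0) as [e|e].
  - subst x. rewrite h0, Rabs_R0. simpl. rewrite Rmult_0_l, Rmult_0_r. lra.
  - destruct (MVT_cor2 f d 0 x ltac:(lra) (fun c _ => proj1 (is_derive_Reals _ _ _) (hd c)))
      as [c [hc1 hc2]].
    rewrite h0, Rminus_0_r, Rminus_0_r in hc1. rewrite hc1.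
    rewrite Rabs_mult, (Rabs_right x) by lra.
    specialize (hM c ltac:(lra)).
    assert (c ^ k <= x ^ k) by (apply pow_incr; lra).
    assert (0 <= M * c ^ k) by (eapply Rle_trans; [apply Rabs_pos|exact hM]).
    simpl.
    assert (0 < c ^ k) by (apply pow_lt; lra).
    assert (0 <= M).
    { destruct (Rle_lt_dec 0 M) as [h|h]; [exact h|]. nra. }
    assert (Rabs (d c) <= M * x ^ k) by nra.
    assert (0 <= Rabs (d c)) by apply Rabs_pos.
    nra.
Qed.


Definition Xf (p q x : R) := exp (x * p) * cos (x * q).
Definition Yf (p q x : R) := exp (x * p) * sin (x * q).

Lemma XY_bound p q x m : 0 <= x <= 1 -> Rabs p <= m -> Rabs q <= m ->
  Rabs (Xf p q x) <= exp m /\ Rabs (Yf p q x) <= exp m.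
Proof.
  intros hx hp hq. unfold Xf, Yf.
  assert (he : exp (x * p) <= exp m).
  { destruct (Rle_lt_or_eq_dec (x * p) m) as [h|h].
    - apply Rabs_le_between in hp. nra.
    - left; apply exp_increasing; exact h.
    - right; rewrite h; reflexivity. }
  assert (hep := exp_pos (x * p)).
  rewrite !Rabs_mult, (Rabs_right (exp _)) by lra.
  assert (Rabs (cos (x * q)) <= 1) by (apply Rabs_le; apply COS_bound).
  assert (Rabs (sin (x * q)) <= 1) by (apply Rabs_le; apply SIN_bound).
  assert (0 <= Rabs (cos (x*q))) by apply Rabs_pos.
  assert (0 <= Rabs (sin (x*q))) by apply Rabs_pos.
  split; nra.
Qed.

Lemma Xf_der p q x : is_derive (Xf p q) x (p * Xf p q x - q * Yf p q x).
Proof. unfold Xf, Yf. auto_derive; [exact I|ring]. Qed.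
Lemma Yf_der p q x : is_derive (Yf p q) x (p * Yf p q x + q * Xf p q x).
Proof. unfold Xf, Yf. auto_derive; [exact I|ring]. Qed.

Lemma Xf0 p q : Xf p q 0 = 1.
Proof. unfold Xf. rewrite !Rmult_0_l, exp_0, cos_0. ring. Qed.
Lemma Yf0 p q : Yf p q 0 = 0.
Proof. unfold Yf. rewrite !Rmult_0_l, exp_0, sin_0. ring. Qed.

Lemma der_sub_poly (f : R -> R) df x (a b c d : R) :
  is_derive f x df -> d = df - b - 2 * c * x ->
  is_derive (fun y => f y - a - b * y - c * y ^ 2) x d.
Proof.
  intros h hd.
  assert (h2 : is_derive (fun y => a + b * y + c * y ^ 2) x (b + 2 * c * x)) by (auto_derive; [exact I|ring]).
  assert (h3 := is_derive_minus _ _ _ _ _ h h2).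
  replace d with (minus df (b + 2 * c * x)) by (rewrite hd; unfold minus, plus, opp; simpl; ring).
  eapply is_derive_ext; [|exact h3]. intros y; unfold minus, plus, opp; simpl; ring.
Qed.

Definition PX p q a b c y := Xf p q y - a - b * y - c * y ^ 2.
Definition PY p q a b c y := Yf p q y - a - b * y - c * y ^ 2.


Lemma absd2 (u v p q m e1 e2 : R) : Rabs p <= m -> Rabs q <= m -> Rabs u <= e1 -> Rabs v <= e2 ->
  Rabs (p * u - q * v) <= m * (e1 + e2) /\ Rabs (p * u + q * v) <= m * (e1 + e2).
Proof.
  intros hp hq hu hv.
  assert (0 <= Rabs u) by apply Rabs_pos. assert (0 <= Rabs v) by apply Rabs_pos.
  assert (0 <= Rabs p) by apply Rabs_pos. assert (0 <= Rabs q) by apply Rabs_pos.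
  split; (eapply Rle_trans; [apply Rabs_triang|]); rewrite ?Rabs_Ropp, !Rabs_mult; nra.
Qed.

Lemma taylor_levels p q m : Rabs p <= m -> Rabs q <= m ->
  (forall x, 0 <= x <= 1 ->
     Rabs (PX p q 1 0 0 x) <= 2 * m * exp m * x ^ 1 /\ Rabs (PY p q 0 0 0 x) <= 2 * m * exp m * x ^ 1) /\
  (forall x, 0 <= x <= 1 ->
     Rabs (PX p q 1 p 0 x) <= 4 * m ^ 2 * exp m * x ^ 2 /\
     Rabs (PY p q 0 q 0 x) <= 4 * m ^ 2 * exp m * x ^ 2) /\
  (forall x, 0 <= x <= 1 ->
     Rabs (PX p q 1 p ((p ^ 2 - q ^ 2) / 2) x) <= 8 * m ^ 3 * exp m * x ^ 3 /\
     Rabs (PY p q 0 q (p * q) x) <= 8 * m ^ 3 * exp m * x ^ 3).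
Proof.
  intros hp hq.
  assert (hm : 0 <= m) by (pose proof (Rabs_pos p); lra).
  assert (hE := exp_pos m).
  assert (hXY := fun x hx => XY_bound p q x m hx hp hq).
  assert (L1 : forall x, 0 <= x <= 1 ->
     Rabs (PX p q 1 0 0 x) <= 2 * m * exp m * x ^ 1 /\ Rabs (PY p q 0 0 0 x) <= 2 * m * exp m * x ^ 1).
  { intros x hx. split.
    - apply (step_bound _ (fun y => p * Xf p q y - q * Yf p q y) _ 0); auto.
      + unfold PX; rewrite Xf0; ring.
      + intros y. unfold PX; apply (der_sub_poly _ (p * Xf p q y - q * Yf p q y)); [apply Xf_der|ring].
      + intros y hy. destruct (hXY y hy) as [h1 h2].
        destruct (absd2 _ _ p q m _ _ hp hq h1 h2) as [k _]. simpl. lra.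
    - apply (step_bound _ (fun y => p * Yf p q y + q * Xf p q y) _ 0); auto.
      + unfold PY; rewrite Yf0; ring.
      + intros y. unfold PY; apply (der_sub_poly _ (p * Yf p q y + q * Xf p q y)); [apply Yf_der|ring].
      + intros y hy. destruct (hXY y hy) as [h1 h2].
        destruct (absd2 _ _ p q m _ _ hp hq h2 h1) as [_ k]. simpl. lra. }
  assert (L2 : forall x, 0 <= x <= 1 ->
     Rabs (PX p q 1 p 0 x) <= 4 * m ^ 2 * exp m * x ^ 2 /\
     Rabs (PY p q 0 q 0 x) <= 4 * m ^ 2 * exp m * x ^ 2).
  { intros x hx. split.
    - apply (step_bound _ (fun y => p * PX p q 1 0 0 y - q * PY p q 0 0 0 y) _ 1); auto.
      + unfold PX; rewrite Xf0; ring.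
      + intros y. unfold PX; apply (der_sub_poly _ (p * Xf p q y - q * Yf p q y)); [apply Xf_der|unfold PX, PY; ring].
      + intros y hy. destruct (L1 y hy) as [h1 h2].
        destruct (absd2 _ _ p q m _ _ hp hq h1 h2) as [k _]. 
        eapply Rle_trans; [exact k|]. right; simpl; ring.
    - apply (step_bound _ (fun y => p * PY p q 0 0 0 y + q * PX p q 1 0 0 y) _ 1); auto.
      + unfold PY; rewrite Yf0; ring.
      + intros y. unfold PY; apply (der_sub_poly _ (p * Yf p q y + q * Xf p q y)); [apply Yf_der|unfold PX, PY; ring].
      + intros y hy. destruct (L1 y hy) as [h1 h2].
        destruct (absd2 _ _ p q m _ _ hp hq h2 h1) as [_ k].
        eapply Rle_trans; [exact k|]. right; simpl; ring. }
  assert (L3 : forall x, 0 <= x <= 1 ->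
     Rabs (PX p q 1 p ((p ^ 2 - q ^ 2) / 2) x) <= 8 * m ^ 3 * exp m * x ^ 3 /\
     Rabs (PY p q 0 q (p * q) x) <= 8 * m ^ 3 * exp m * x ^ 3).
  { intros x hx. split.
    - apply (step_bound _ (fun y => p * PX p q 1 p 0 y - q * PY p q 0 q 0 y) _ 2); auto.
      + unfold PX; rewrite Xf0; ring.
      + intros y. unfold PX; apply (der_sub_poly _ (p * Xf p q y - q * Yf p q y)); [apply Xf_der|unfold PX, PY; field].
      + intros y hy. destruct (L2 y hy) as [h1 h2].
        destruct (absd2 _ _ p q m _ _ hp hq h1 h2) as [k _]. 
        eapply Rle_trans; [exact k|]. right; simpl; ring.
    - apply (step_bound _ (fun y => p * PY p q 0 q 0 y + q * PX p q 1 p 0 y) _ 2); auto.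
      + unfold PY; rewrite Yf0; ring.
      + intros y. unfold PY; apply (der_sub_poly _ (p * Yf p q y + q * Xf p q y)); [apply Yf_der|unfold PX, PY; ring].
      + intros y hy. destruct (L2 y hy) as [h1 h2].
        destruct (absd2 _ _ p q m _ _ hp hq h2 h1) as [_ k].
        eapply Rle_trans; [exact k|]. right; simpl; ring. }
  auto.
Qed.

Lemma ln_le_sub1 y : 0 < y -> ln y <= y - 1.
Proof. intros h. assert (H := exp_ineq1_le (ln y)). rewrite exp_ln in H; lra. Qed.

Lemma ln_ge y : 0 < y -> 1 - / y <= ln y.
Proof.
  intros h. assert (H := ln_le_sub1 (/ y) ltac:(apply Rinv_0_lt_compat; lra)).
  rewrite ln_Rinv in H; lra.
Qed.

Lemma ln_sqrt' V : 0 < V -> ln (sqrt V) = ln V / 2.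
Proof.
  intros h. assert (hs := sqrt_lt_R0 V h).
  assert (E : ln V = ln (sqrt V * sqrt V)) by (rewrite sqrt_sqrt; lra).
  rewrite ln_mult in E by lra. lra.
Qed.

Lemma im_le_Cmod' (z : C) : Rabs (Im z) <= Cmod z.
Proof.
  destruct z as [x y]. unfold Cmod; simpl.
  rewrite <- sqrt_Rsqr_abs. apply sqrt_le_1_alt. unfold Rsqr. nra.
Qed.

Lemma Cmod_le_sum (z : C) : Cmod z <= Rabs (Re z) + Rabs (Im z).
Proof.
  destruct z as [x y]. unfold Cmod; simpl.
  assert (0 <= Rabs x) by apply Rabs_pos. assert (0 <= Rabs y) by apply Rabs_pos.
  rewrite <- (sqrt_Rsqr (Rabs x + Rabs y)) by lra.
  apply sqrt_le_1_alt. unfold Rsqr.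
  replace (x * (x * 1)) with (Rabs x * Rabs x) by (rewrite <- Rabs_mult; rewrite Rabs_right; [ring|nra]).
  replace (y * (y * 1)) with (Rabs y * Rabs y) by (rewrite <- Rabs_mult; rewrite Rabs_right; [ring|nra]).
  nra.
Qed.

Lemma Cmod_pair_sq x y : Cmod (x, y) ^ 2 = x ^ 2 + y ^ 2.
Proof. rewrite Cmod2_alt. reflexivity. Qed.

Lemma Cexp_add z1 z2 : Cexp (z1 + z2) = (Cexp z1 * Cexp z2)%C.
Proof.
  destruct z1 as [x1 y1], z2 as [x2 y2]. unfold Cexp, Cmult; simpl.
  rewrite exp_plus, cos_plus, sin_plus. f_equal; ring.
Qed.

Lemma Cmod_Cexp z : Cmod (Cexp z) = exp (Re z).
Proof.
  destruct z as [x y]. unfold Cexp, Cmod; simpl.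
  replace (exp x * cos y * (exp x * cos y * 1) + exp x * sin y * (exp x * sin y * 1))
    with (Rsqr (exp x)).
  2:{ assert (H := sin2_cos2 y). unfold Rsqr in *. 
      replace (exp x * cos y * (exp x * cos y * 1) + exp x * sin y * (exp x * sin y * 1))
        with (exp x * exp x * (sin y * sin y + cos y * cos y)) by ring. rewrite H. ring. }
  apply sqrt_Rsqr. apply Rlt_le, exp_pos.
Qed.

Lemma Cexp_RtoC r : Cexp (RtoC r) = RtoC (exp r).
Proof. unfold Cexp, RtoC; simpl. rewrite cos_0, sin_0. f_equal; ring. Qed.

Definition Clog (z : C) : C := (ln (Cmod z), atan (Im z / Re z)).

Lemma Cexp_Clog z : 0 < Re z -> Cexp (Clog z) = z.
Proof.
  destruct z as [x y]. simpl. intros hx.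
  unfold Cexp, Clog; simpl.
  set (M := Cmod (x, y)).
  assert (hM : 0 < M).
  { unfold M. eapply Rlt_le_trans; [|apply re_le_Cmod]. simpl. rewrite Rabs_right; lra. }
  assert (hM2 : M ^ 2 = x ^ 2 + y ^ 2) by (unfold M; apply Cmod_pair_sq).
  assert (hs : sqrt (1 + (y / x)²) = M / x).
  { replace (1 + (y / x)²) with (Rsqr (M / x)).
    - apply sqrt_Rsqr. apply Rlt_le, Rdiv_lt_0_compat; lra.
    - unfold Rsqr. 
      replace (M / x * (M / x)) with (M ^ 2 / x ^ 2) by (field; lra). rewrite hM2. field. lra. }
  rewrite exp_ln by lra. rewrite cos_atan, sin_atan, hs.
  f_equal; field; lra.
Qed.

Lemma Clog_1 : Clog 1%C = 0%C.
Proof.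
  unfold Clog. simpl.
  replace (Cmod 1) with 1 by (symmetry; apply Cmod_1).
  rewrite ln_1. replace (0 / 1) with 0 by field. rewrite atan_0. reflexivity.
Qed.

Lemma atan_cubic q : Rabs (atan q - q) <= Rabs q ^ 3.
Proof.
  destruct (MVT_abs (fun y => atan y - y) (fun y => / (1 + y ^ 2) - 1) 0 q) as [c [h1 h2]].
  { intros c _. apply is_derive_Reals. auto_derive; [exact I|]. simpl. field.
    assert (0 <= c * c) by nra. lra. }
  rewrite atan_0, !Rminus_0_r in h1. rewrite h1.
  assert (hc : Rabs c <= Rabs q).
  { unfold Rmin, Rmax in h2. destruct (Rle_dec 0 q);
    unfold Rabs; destruct (Rcase_abs c), (Rcase_abs q); lra. }
  assert (0 <= c ^ 2) by nra.
  replace (/ (1 + c ^ 2) - 1) with (- (c ^ 2 / (1 + c ^ 2))) by (field; lra).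
  rewrite Rabs_Ropp, Rabs_right.
  2:{ apply Rle_ge, Rdiv_le_0_compat; lra. }
  assert (c ^ 2 / (1 + c ^ 2) <= c ^ 2).
  { apply Rmult_le_reg_r with (1 + c ^ 2); [lra|]. field_simplify; [|lra]. nra. }
  assert (c ^ 2 <= Rabs q ^ 2).
  { replace (c ^ 2) with (Rabs c ^ 2) by (rewrite RPow_abs; apply Rabs_right; lra).
    apply pow_incr; split; [apply Rabs_pos|lra]. }
  assert (0 <= Rabs q) by apply Rabs_pos.
  assert (0 <= c ^ 2 / (1 + c ^ 2)) by (apply Rdiv_le_0_compat; lra).
  replace (Rabs q ^ 3) with (Rabs q ^ 2 * Rabs q) by ring.
  apply Rmult_le_compat_r; lra.
Qed.

Lemma atan_lip x y : Rabs (atan x - atan y) <= Rabs (x - y).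
Proof.
  destruct (MVT_abs atan (fun c => / (1 + c ^ 2)) y x) as [c [h1 h2]].
  { intros c _. apply derivable_pt_lim_atan. }
  rewrite h1.
  assert (0 <= c ^ 2) by nra.
  assert (0 < / (1 + c ^ 2) <= 1).
  { split. apply Rinv_0_lt_compat; lra. rewrite <- Rinv_1. apply Rinv_le_contravar; lra. }
  rewrite Rabs_right by lra.
  assert (0 <= Rabs (x - y)) by apply Rabs_pos. nra.
Qed.

Lemma Cmod_sqrt x y : Cmod (x, y) = sqrt (x ^ 2 + y ^ 2).
Proof. reflexivity. Qed.

Lemma Clog_quad (u : C) : Cmod u <= 1/4 -> Cmod (Clog (1 + u) - u) <= 12 * Cmod u ^ 2.
Proof.
  destruct u as [a b]. intros hr.
  set (r := Cmod (a, b)) in *.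
  assert (hr2 : r ^ 2 = a ^ 2 + b ^ 2) by (unfold r; apply Cmod_pair_sq).
  assert (ha : Rabs a <= r) by (unfold r; apply (re_le_Cmod (a, b))).
  assert (hb : Rabs b <= r) by (unfold r; apply (im_le_Cmod' (a, b))).
  assert (hr0 : 0 <= r) by apply Cmod_ge_0.
  apply Rabs_le_between in ha. apply Rabs_le_between in hb.
  eapply Rle_trans; [apply Cmod_le_sum|].
  unfold Clog. simpl.
  replace (1 + a) with (1 + a) by ring.
  change (Cmod (1 + (a, b))%C) with (sqrt ((1 + a) ^ 2 + (0 + b) ^ 2)).
  set (V := (1 + a) ^ 2 + (0 + b) ^ 2).
  assert (hV : V = 1 + (2 * a + r ^ 2)) by (unfold V; rewrite hr2; ring).
  set (v := 2 * a + r ^ 2) in *.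
  assert (hv1 : -1/2 <= v) by (unfold v; nra).
  assert (hv2 : Rabs v <= 9/4 * r) by (unfold v; apply Rabs_le; nra).
  assert (hVp : 0 < V) by lra.
  rewrite ln_sqrt' by lra.
  assert (l1 := ln_le_sub1 V hVp).
  assert (l2 := ln_ge V hVp).
  assert (l3 : 1 - / V >= v - 2 * v ^ 2).
  { rewrite hV. apply Rle_ge. 
    replace (1 - / (1 + v)) with (v / (1 + v)) by (field; lra).
    assert (E : v / (1 + v) - (v - 2 * v ^ 2) = v ^ 2 * (1 + 2 * v) / (1 + v)) by (field; lra).
    assert (0 <= v ^ 2 * (1 + 2 * v) / (1 + v)).
    { apply Rdiv_le_0_compat; [|lra]. apply Rmult_le_pos; nra. }
    lra. }
  assert (hv3 : v ^ 2 <= 81/16 * r ^ 2).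
  { apply Rabs_le_between in hv2. nra. }
  assert (hre : Rabs (ln V / 2 - a) <= 6 * r ^ 2).
  { assert (hvdef : v = 2 * a + r ^ 2) by reflexivity.
    assert (0 <= r ^ 2) by nra.
    apply Rabs_le. split; lra. }
  set (q := (0 + b) / (1 + a)).
  assert (h1a : 3/4 <= 1 + a) by nra.
  assert (hq : Rabs (q - b) <= 4/3 * r ^ 2).
  { unfold q. replace ((0 + b) / (1 + a) - b) with (- (a * b) / (1 + a)) by (field; lra).
    unfold Rdiv. rewrite Rabs_mult, Rabs_Ropp, Rabs_mult, (Rabs_right (/ (1 + a))).
    2:{ apply Rle_ge, Rlt_le, Rinv_0_lt_compat; lra. }
    assert (Rabs a * Rabs b <= r ^ 2).
    { assert (0 <= Rabs a) by apply Rabs_pos. assert (0 <= Rabs b) by apply Rabs_pos.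
      assert (Rabs a <= r) by (apply Rabs_le; lra). assert (Rabs b <= r) by (apply Rabs_le; lra). nra. }
    assert (/ (1 + a) <= 4/3).
    { replace (4/3) with (/ (3/4)) by field. apply Rinv_le_contravar; lra. }
    assert (0 <= Rabs a * Rabs b) by (apply Rmult_le_pos; apply Rabs_pos).
    assert (0 <= / (1 + a)) by (apply Rlt_le, Rinv_0_lt_compat; lra).
    nra. }
  assert (hqa : Rabs q <= 1/3).
  { unfold q. unfold Rdiv. rewrite Rabs_mult, (Rabs_right (/ (1 + a))).
    2:{ apply Rle_ge, Rlt_le, Rinv_0_lt_compat; lra. }
    assert (Rabs (0 + b) <= 1/4) by (apply Rabs_le; lra).
    assert (/ (1 + a) <= 4/3).
    { replace (4/3) with (/ (3/4)) by field. apply Rinv_le_contravar; lra. }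
    assert (0 <= / (1 + a)) by (apply Rlt_le, Rinv_0_lt_compat; lra).
    assert (0 <= Rabs (0 + b)) by apply Rabs_pos. nra. }
  assert (hq2 : Rabs q <= 4/3 * r + 4/3 * r ^ 2).
  { assert (Rabs b <= r) by (apply Rabs_le; lra).
    assert (Ht := Rabs_triang (q - b) b). replace (q - b + b) with q in Ht by ring. lra. }
  assert (hat := atan_cubic q).
  assert (hcub : Rabs q ^ 3 <= 2 * r ^ 2).
  { assert (0 <= Rabs q) by apply Rabs_pos.
    assert (Rabs q <= 5/3 * r) by nra.
    assert (Rabs q ^ 2 <= 25/9 * r ^ 2).
    { nra. }
    replace (Rabs q ^ 3) with (Rabs q ^ 2 * Rabs q) by ring. nra. }
  assert (him : Rabs (atan q - b) <= 6 * r ^ 2).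
  { replace (atan q - b) with ((atan q - q) + (q - b)) by ring.
    eapply Rle_trans; [apply Rabs_triang|]. lra. }
  simpl in hre, him |- *. 
  replace (ln V / 2 - a) with (ln V / 2 - a) in hre by ring.
  change (Rabs (ln V / 2 - a) + Rabs (atan q - b) <= 12 * (r * (r * 1))).
  simpl in hre, him. lra.
Qed.

Lemma ln_lip x y : 3/4 <= x -> 3/4 <= y -> Rabs (ln x - ln y) <= 4/3 * Rabs (x - y).
Proof.
  intros hx hy.
  assert (h1 := ln_le_sub1 (x / y) ltac:(apply Rdiv_lt_0_compat; lra)).
  assert (h2 := ln_le_sub1 (y / x) ltac:(apply Rdiv_lt_0_compat; lra)).
  rewrite ln_div in h1, h2 by lra.
  replace (x / y - 1) with ((x - y) / y) in h1 by (field; lra).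
  replace (y / x - 1) with ((y - x) / x) in h2 by (field; lra).
  assert ((x - y) / y <= 4/3 * Rabs (x - y)).
  { unfold Rdiv. assert (/ y <= 4/3) by (replace (4/3) with (/ (3/4)) by field; apply Rinv_le_contravar; lra).
    assert (0 < / y) by (apply Rinv_0_lt_compat; lra).
    assert (x - y <= Rabs (x - y)) by apply Rle_abs.
    assert (0 <= Rabs (x - y)) by apply Rabs_pos. nra. }
  assert ((y - x) / x <= 4/3 * Rabs (x - y)).
  { unfold Rdiv. assert (/ x <= 4/3) by (replace (4/3) with (/ (3/4)) by field; apply Rinv_le_contravar; lra).
    assert (0 < / x) by (apply Rinv_0_lt_compat; lra).
    assert (y - x <= Rabs (x - y)) by (rewrite Rabs_minus_sym; apply Rle_abs).
    assert (0 <= Rabs (x - y)) by apply Rabs_pos. nra. }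
  apply Rabs_le; lra.
Qed.

Lemma Cmod_rev_tri z1 z2 : Rabs (Cmod z1 - Cmod z2) <= Cmod (z1 - z2).
Proof.
  assert (h1 := Cmod_triangle (z1 - z2) z2).
  assert (h2 := Cmod_triangle (z2 - z1) z1).
  replace (z1 - z2 + z2)%C with z1 in h1 by ring.
  replace (z2 - z1 + z1)%C with z2 in h2 by ring.
  replace (z2 - z1)%C with (- (z1 - z2))%C in h2 by ring.
  rewrite Cmod_opp in h2.
  apply Rabs_le; lra.
Qed.

Lemma Clog_lip z1 z2 : Cmod (z1 - 1) <= 1/4 -> Cmod (z2 - 1) <= 1/4 ->
  Cmod (Clog z1 - Clog z2) <= 5 * Cmod (z1 - z2).
Proof.
  intros h1 h2.
  assert (hM1 : 3/4 <= Cmod z1).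
  { assert (H := Cmod_rev_tri z1 1). rewrite Cmod_1 in H. apply Rabs_le_between in H. lra. }
  assert (hM2 : 3/4 <= Cmod z2).
  { assert (H := Cmod_rev_tri z2 1). rewrite Cmod_1 in H. apply Rabs_le_between in H. lra. }
  destruct z1 as [x1 y1], z2 as [x2 y2].
  assert (hx1 := re_le_Cmod ((x1, y1) - 1)%C). assert (hy1 := im_le_Cmod' ((x1, y1) - 1)%C).
  assert (hx2 := re_le_Cmod ((x2, y2) - 1)%C). assert (hy2 := im_le_Cmod' ((x2, y2) - 1)%C).
  assert (hdx := re_le_Cmod ((x1, y1) - (x2, y2))%C). assert (hdy := im_le_Cmod' ((x1, y1) - (x2, y2))%C).
  simpl in hx1, hy1, hx2, hy2, hdx, hdy.
  set (d := Cmod ((x1, y1) - (x2, y2))%C) in *.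
  change (Rabs (x1 - x2) <= d) in hdx. change (Rabs (y1 - y2) <= d) in hdy.
  apply Rabs_le_between in hx1. apply Rabs_le_between in hy1.
  apply Rabs_le_between in hx2. apply Rabs_le_between in hy2.
  eapply Rle_trans; [apply Cmod_le_sum|]. unfold Clog; simpl.
  assert (hre : Rabs (ln (Cmod (x1, y1)) - ln (Cmod (x2, y2))) <= 4/3 * d).
  { eapply Rle_trans; [apply ln_lip; lra|].
    assert (H := Cmod_rev_tri (x1, y1) (x2, y2)). fold d in H. lra. }
  assert (him : Rabs (atan (y1 / x1) - atan (y2 / x2)) <= 8/3 * d).
  { eapply Rle_trans; [apply atan_lip|].
    replace (y1 / x1 - y2 / x2) with (((y1 - y2) * x2 + y2 * (x2 - x1)) * / (x1 * x2)) by (field; lra).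
    rewrite Rabs_mult, (Rabs_right (/ (x1 * x2))).
    2:{ apply Rle_ge, Rlt_le, Rinv_0_lt_compat. nra. }
    assert (/ (x1 * x2) <= 16/9).
    { replace (16/9) with (/ (9/16)) by field. apply Rinv_le_contravar; nra. }
    assert (0 < / (x1 * x2)) by (apply Rinv_0_lt_compat; nra).
    assert (Rabs ((y1 - y2) * x2 + y2 * (x2 - x1)) <= 3/2 * d).
    { eapply Rle_trans; [apply Rabs_triang|]. rewrite !Rabs_mult.
      rewrite (Rabs_right x2) by lra.
      assert (Rabs y2 <= 1/4) by (apply Rabs_le; lra).
      assert (Rabs (x2 - x1) <= d) by (rewrite Rabs_minus_sym; exact hdx).
      assert (0 <= Rabs (y1 - y2)) by apply Rabs_pos.
      assert (0 <= Rabs y2) by apply Rabs_pos.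
      assert (0 <= Rabs (x2 - x1)) by apply Rabs_pos.
      nra. }
    assert (0 <= Rabs ((y1 - y2) * x2 + y2 * (x2 - x1))) by apply Rabs_pos.
    nra. }
  assert (0 <= d) by apply Cmod_ge_0.
  change (Rabs (ln (Cmod (x1, y1)) - ln (Cmod (x2, y2))) + Rabs (atan (y1 / x1) - atan (y2 / x2)) <= 5 * d). lra.
Qed.

Lemma sum_n_C (u : nat -> C) N :
  sum_n u N = (sum_n (fun n => Re (u n)) N, sum_n (fun n => Im (u n)) N).
Proof.
  induction N as [|N IH].
  - rewrite !sum_O. destruct (u 0%nat); reflexivity.
  - rewrite !sum_Sn, IH. destruct (u (S N)). reflexivity.
Qed.

Lemma is_series_C (u : nat -> C) (lr li : R) :
  is_series (fun n => Re (u n)) lr -> is_series (fun n => Im (u n)) li ->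
  is_series (V := C_NormedModule) u (lr, li).
Proof.
  intros hr hi. unfold is_series in *.
  apply filterlim_locally. intros eps.
  assert (h1 := proj1 (filterlim_locally _ _) hr eps).
  assert (h2 := proj1 (filterlim_locally _ _) hi eps).
  generalize (filter_and _ _ h1 h2). apply filter_imp.
  intros N [b1 b2]. rewrite sum_n_C. split; assumption.
Qed.

Lemma Cmod_le_sum' (z : C) : Cmod z <= Rabs (Re z) + Rabs (Im z).
Proof.
  destruct z as [x y]. unfold Cmod; simpl.
  assert (0 <= Rabs x) by apply Rabs_pos. assert (0 <= Rabs y) by apply Rabs_pos.
  rewrite <- (sqrt_Rsqr (Rabs x + Rabs y)) by lra.
  apply sqrt_le_1_alt. unfold Rsqr.
  replace (x * (x * 1)) with (Rabs x * Rabs x) by (rewrite <- Rabs_mult; rewrite Rabs_right; [ring|nra]).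
  replace (y * (y * 1)) with (Rabs y * Rabs y) by (rewrite <- Rabs_mult; rewrite Rabs_right; [ring|nra]).
  nra.
Qed.

Lemma im_le_Cmod'' (z : C) : Rabs (Im z) <= Cmod z.
Proof.
  destruct z as [x y]. unfold Cmod; simpl.
  rewrite <- sqrt_Rsqr_abs. apply sqrt_le_1_alt. unfold Rsqr. nra.
Qed.

Lemma lip_within (f : C -> C) (D : C -> Prop) w K : 0 <= K ->
  (forall w', D w' -> Cmod (f w' - f w) <= K * Cmod (w' - w)) ->
  filterlim f (within D (locally w)) (locally (f w)).
Proof.
  intros hK hL. apply filterlim_locally. intros eps.
  unfold within.
  assert (hd : 0 < eps / (2 * K + 1)).
  { apply Rdiv_lt_0_compat; [apply cond_pos|lra]. }
  exists (mkposreal _ hd). intros y hy hDy.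
  destruct y as [y1 y2], w as [w1 w2].
  destruct hy as [hy1 hy2].
  change (Rabs (y1 - w1) < eps / (2 * K + 1)) in hy1.
  change (Rabs (y2 - w2) < eps / (2 * K + 1)) in hy2.
  assert (hc : Cmod ((y1, y2) - (w1, w2)) < 2 * (eps / (2 * K + 1))).
  { eapply Rle_lt_trans; [apply Cmod_le_sum'|]. simpl. 
    change (Rabs (y1 - w1) + Rabs (y2 - w2) < 2 * (eps / (2 * K + 1))). lra. }
  specialize (hL (y1, y2) hDy).
  assert (hfe : Cmod (f (y1, y2) - f (w1, w2)) < eps).
  { eapply Rle_lt_trans; [exact hL|].
    assert (K * Cmod ((y1, y2) - (w1, w2)) <= K * (2 * (eps / (2 * K + 1)))).
    { apply Rmult_le_compat_l; lra. }
    assert (K * (2 * (eps / (2 * K + 1))) < eps).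
    { assert (E : K * (2 * (eps / (2 * K + 1))) = eps * (2 * K / (2 * K + 1))) by (field; lra).
      rewrite E. assert (2 * K / (2 * K + 1) < 1).
      { apply Rmult_lt_reg_r with (2 * K + 1); [lra|]. field_simplify; lra. }
      assert (0 < eps) by apply cond_pos. nra. }
    lra. }
  assert (h1 := re_le_Cmod (f (y1, y2) - f (w1, w2))%C). assert (h2 := im_le_Cmod'' (f (y1, y2) - f (w1, w2))%C).
  destruct (f (y1, y2)) as [f1 f2], (f (w1, w2)) as [g1 g2]. simpl in h1, h2.
  split.
  - change (Rabs (f1 - g1) < eps). change (Rabs (f1 - g1) <= Cmod ((f1, f2) - (g1, g2))) in h1. lra.
  - change (Rabs (f2 - g2) < eps). change (Rabs (f2 - g2) <= Cmod ((f1, f2) - (g1, g2))) in h2. lra.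
Qed.

Definition sc (x : R) (w : C) : C := (x * Re w, x * Im w).

Lemma Cmod_sc x w : Cmod (sc x w) = Rabs x * Cmod w.
Proof.
  replace (sc x w) with (RtoC x * w)%C.
  - rewrite Cmod_mult, Cmod_R. reflexivity.
  - destruct w as [u v]. unfold sc, RtoC, Cmult; simpl. f_equal; ring.
Qed.

Lemma Cexp_taylor1 z : Cmod (Cexp z - 1) <= 4 * Cmod z * exp (Cmod z).
Proof.
  destruct z as [p q].
  set (m := Cmod (p, q)).
  assert (hp : Rabs p <= m) by apply (re_le_Cmod (p, q)).
  assert (hq : Rabs q <= m) by apply (im_le_Cmod' (p, q)).
  destruct (taylor_levels p q m hp hq) as [L1 _].
  destruct (L1 1 ltac:(lra)) as [h1 h2].
  unfold PX, PY, Xf, Yf in h1, h2. rewrite !Rmult_1_l in h1, h2.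
  eapply Rle_trans; [apply Cmod_le_sum|].
  unfold Cexp; simpl.
  change (Rabs (exp p * cos q - 1) + Rabs (exp p * sin q - 0) <= 4 * m * exp m).
  replace (exp p * cos q - 1 - 0 * 1 - 0 * 1 ^ 2) with (exp p * cos q - 1) in h1 by ring.
  replace (exp p * sin q - 0 - 0 * 1 - 0 * 1 ^ 2) with (exp p * sin q - 0) in h2 by ring.
  rewrite pow_1, Rmult_1_r in h1, h2. lra.
Qed.

Lemma Cexp_taylor3 z :
  Rabs (Re (Cexp z) - 1 - Re z - (Re z ^ 2 - Im z ^ 2) / 2) <= 8 * Cmod z ^ 3 * exp (Cmod z) /\
  Rabs (Im (Cexp z) - Im z - Re z * Im z) <= 8 * Cmod z ^ 3 * exp (Cmod z).
Proof.
  destruct z as [p q].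
  set (m := Cmod (p, q)).
  assert (hp : Rabs p <= m) by apply (re_le_Cmod (p, q)).
  assert (hq : Rabs q <= m) by apply (im_le_Cmod' (p, q)).
  destruct (taylor_levels p q m hp hq) as [_ [_ L3]]. clearbody m.
  destruct (L3 1 ltac:(lra)) as [h1 h2].
  unfold PX, PY, Xf, Yf in h1, h2. rewrite !Rmult_1_l in h1, h2.
  rewrite !pow1, !Rmult_1_r in h1, h2.
  unfold Cexp; simpl.
  split.
  - replace (exp p * cos q - 1 - p - (p * (p * 1) - q * (q * 1)) / 2) with
      (exp p * cos q - 1 - p - (p ^ 2 - q ^ 2) / 2) by (simpl; ring).
    replace (8 * (m * (m * (m * 1))) * exp m) with (8 * m ^ 3 * exp m) by (simpl; ring). exact h1.
  - replace (exp p * sin q - q - p * q) with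
      (exp p * sin q - 0 - q - p * q) by ring.
    replace (8 * (m * (m * (m * 1))) * exp m) with (8 * m ^ 3 * exp m) by (simpl; ring). exact h2.
Qed.

Lemma exp_INR_mul2 (n : nat) (s : R) : exp (INR n * s) = exp s ^ n.
Proof.
  induction n as [|n IH].
  - simpl. rewrite Rmult_0_l, exp_0; reflexivity.
  - rewrite S_INR, Rmult_plus_distr_r, Rmult_1_l, exp_plus, IH.
    change (exp s ^ S n) with (exp s * exp s ^ n). ring.
Qed.

Lemma exp_abs_le x : exp (Rabs x) <= exp x + exp (- x).
Proof.
  assert (h1 := exp_pos x). assert (h2 := exp_pos (- x)).
  unfold Rabs; destruct (Rcase_abs x); lra.
Qed.

Lemma cubic_exp y : 0 <= y -> y ^ 3 * exp (y / 2) <= 216 * exp y.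
Proof.
  intros hy.
  assert (h1 := exp_ineq1_le (y / 6)).
  assert (E : exp (y / 2) = exp (y / 6) ^ 3).
  { rewrite <- exp_INR_mul2. f_equal. simpl. field. }
  assert (E2 : exp y = exp (y / 2) * exp (y / 2)) by (rewrite <- exp_plus; f_equal; field).
  assert (y ^ 3 <= 216 * exp (y / 2)).
  { rewrite E. assert (0 <= y / 6) by lra.
    assert ((y / 6) ^ 3 <= exp (y / 6) ^ 3) by (apply pow_incr; lra).
    replace (y ^ 3) with (216 * (y / 6) ^ 3) by field. lra. }
  rewrite E2. assert (h3 := exp_pos (y / 2)). nra.
Qed.

Lemma lin_exp y : 0 <= y -> y * exp (y / 2) <= 2 * exp y.
Proof.
  intros hy.
  assert (h1 := exp_ineq1_le (y / 2)).
  assert (E2 : exp y = exp (y / 2) * exp (y / 2)) by (rewrite <- exp_plus; f_equal; field).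
  rewrite E2. assert (h3 := exp_pos (y / 2)). nra.
Qed.

Definition xn a t n := INR n - Af a t.
Definition Mv a t s := exp (- Af a t * s) * Hf a (t + s) / Hf a t.
Definition Gre a t w := Series (fun n => pw a t n * Re (Cexp (sc (xn a t n) w))).
Definition Gim a t w := Series (fun n => pw a t n * Im (Cexp (sc (xn a t n) w))).
Definition Gf a t w : C := (Gre a t w, Gim a t w).

Lemma Ms' a (hc : CV_radius (coefG a) = p_infty) (hex : exists n, a n <> 0) t s :
  is_series (fun n => pw a t n * exp (xn a t n * s)) (Mv a t s).
Proof. exact (Ms a hc hex t s). Qed.

Lemma exp_Re_sc_le x w : exp (Re (sc x w)) <= exp (x * Cmod w) + exp (- (x * Cmod w)).
Proof.
  eapply Rle_trans; [|apply exp_abs_le].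
  destruct (Rle_lt_or_eq_dec (Re (sc x w)) (Rabs (x * Cmod w))) as [h|h].
  - simpl. eapply Rle_trans; [apply Rle_abs|]. rewrite !Rabs_mult.
    apply Rmult_le_compat_l; [apply Rabs_pos|]. rewrite (Rabs_pos_eq (Cmod w)) by apply Cmod_ge_0. apply re_le_Cmod.
  - left; apply exp_increasing; exact h.
  - right; rewrite h; reflexivity.
Qed.

Lemma Re_Cexp_le z : Rabs (Re (Cexp z)) <= exp (Re z).
Proof. rewrite <- Cmod_Cexp. apply re_le_Cmod. Qed.
Lemma Im_Cexp_le z : Rabs (Im (Cexp z)) <= exp (Re z).
Proof. rewrite <- Cmod_Cexp. apply im_le_Cmod'. Qed.


Lemma G_re_series a (hc : CV_radius (coefG a) = p_infty) (hex : exists n, a n <> 0) t w :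
  is_series (fun n => pw a t n * Re (Cexp (sc (xn a t n) w))) (Gre a t w).
Proof.
  apply Series_correct.
  apply (ex_series_le (K := R_AbsRing) (V := R_CompleteNormedModule) _
    (fun n => pw a t n * exp (xn a t n * Cmod w) + pw a t n * exp (xn a t n * - Cmod w))).
  - intros n. change (norm _) with (Rabs (pw a t n * Re (Cexp (sc (xn a t n) w)))).
    rewrite Rabs_mult, Rabs_pos_eq by (apply pw_nonneg; auto).
    assert (h0 := pw_nonneg a hc hex t n).
    assert (h1 := Re_Cexp_le (sc (xn a t n) w)).
    assert (h2 := exp_Re_sc_le (xn a t n) w).
    replace (xn a t n * - Cmod w) with (- (xn a t n * Cmod w)) by ring.
    assert (Rabs (Re (Cexp (sc (xn a t n) w))) <= exp (xn a t n * Cmod w) + exp (- (xn a t n * Cmod w))) by lra.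
    nra.
  - eexists. apply is_series_plus_R; apply Ms'; auto.
Qed.

Lemma G_im_series a (hc : CV_radius (coefG a) = p_infty) (hex : exists n, a n <> 0) t w :
  is_series (fun n => pw a t n * Im (Cexp (sc (xn a t n) w))) (Gim a t w).
Proof.
  apply Series_correct.
  apply (ex_series_le (K := R_AbsRing) (V := R_CompleteNormedModule) _
    (fun n => pw a t n * exp (xn a t n * Cmod w) + pw a t n * exp (xn a t n * - Cmod w))).
  - intros n. change (norm _) with (Rabs (pw a t n * Im (Cexp (sc (xn a t n) w)))).
    rewrite Rabs_mult, Rabs_pos_eq by (apply pw_nonneg; auto).
    assert (h0 := pw_nonneg a hc hex t n).
    assert (h1 := Im_Cexp_le (sc (xn a t n) w)).
    assert (h2 := exp_Re_sc_le (xn a t n) w).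
    replace (xn a t n * - Cmod w) with (- (xn a t n * Cmod w)) by ring.
    assert (Rabs (Im (Cexp (sc (xn a t n) w))) <= exp (xn a t n * Cmod w) + exp (- (xn a t n * Cmod w))) by lra.
    nra.
  - eexists. apply is_series_plus_R; apply Ms'; auto.
Qed.

Lemma G_C_series a (hc : CV_radius (coefG a) = p_infty) (hex : exists n, a n <> 0) t w :
  is_series (V := C_NormedModule) (fun n => (RtoC (pw a t n) * Cexp (sc (xn a t n) w))%C) (Gf a t w).
Proof.
  apply is_series_C.
  - apply (ser_ext _ _ _ _ (G_re_series a hc hex t w)); [|reflexivity].
    intros n. simpl. ring.
  - apply (ser_ext _ _ _ _ (G_im_series a hc hex t w)); [|reflexivity].
    intros n. simpl. ring.
Qed.

Lemma term_bound3 x w sg : 0 < sg -> Cmod w * sg <= 1/2 ->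
  8 * Cmod (sc x w) ^ 3 * exp (Cmod (sc x w)) <=
  1728 * (Cmod w * sg) ^ 3 * (exp (x * (1 / sg)) + exp (x * - (1 / sg))).
Proof.
  intros hs hr. rewrite Cmod_sc.
  set (r := Cmod w) in *. assert (hr0 : 0 <= r) by apply Cmod_ge_0. clearbody r.
  set (y := Rabs x / sg).
  assert (hy : 0 <= y) by (unfold y; apply Rdiv_le_0_compat; [apply Rabs_pos|lra]).
  assert (E : Rabs x * r = y * (r * sg)) by (unfold y; field; lra).
  rewrite E.
  set (rho := r * sg) in *. assert (0 <= rho) by (unfold rho; nra). clearbody rho.
  assert (he1 : exp (y * rho) <= exp (y / 2)).
  { destruct (Rle_lt_or_eq_dec (y * rho) (y / 2)) as [h|h]; [nra| |].
    - left; apply exp_increasing; exact h.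
    - right; rewrite h; reflexivity. }
  assert (hc := cubic_exp y hy).
  assert (hab : exp y <= exp (x * (1 / sg)) + exp (x * - (1 / sg))).
  { replace y with (Rabs (x * (1 / sg))).
    - replace (x * - (1 / sg)) with (- (x * (1 / sg))) by ring. apply exp_abs_le.
    - unfold y. rewrite Rabs_mult, (Rabs_pos_eq (1 / sg)) by (apply Rlt_le, Rdiv_lt_0_compat; lra).
      field; lra. }
  assert (0 <= y ^ 3) by (apply pow_le; lra).
  assert (0 <= rho ^ 3) by (apply pow_le; lra).
  replace ((y * rho) ^ 3) with (rho ^ 3 * y ^ 3) by ring.
  assert (0 < exp (y * rho)) by apply exp_pos.
  assert (y ^ 3 * exp (y * rho) <= 216 * exp y).
  { eapply Rle_trans; [|exact hc]. apply Rmult_le_compat_l; lra. }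
  assert (0 <= exp y) by (apply Rlt_le, exp_pos).
  assert (rho ^ 3 * (y ^ 3 * exp (y * rho)) <= rho ^ 3 * (216 * exp y)) by (apply Rmult_le_compat_l; lra).
  assert (rho ^ 3 * exp y <= rho ^ 3 * (exp (x * (1 / sg)) + exp (x * - (1 / sg)))) by (apply Rmult_le_compat_l; lra).
  nra.
Qed.

Lemma core_A a (hc : CV_radius (coefG a) = p_infty)
  (hinf : forall N : nat, exists n, (N <= n)%nat /\ a n <> 0) t sg Q :
  0 < sg -> sg ^ 2 = Bf a t -> Mv a t (1 / sg) <= Q -> Mv a t (- (1 / sg)) <= Q ->
  forall w, Cmod w * sg <= 1/2 ->
  Cmod (Gf a t w - 1 - RtoC (1/2) * w ^ 2 * RtoC (Bf a t))%C <= 6912 * Q * (Cmod w * sg) ^ 3.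
Proof.
  intros hs hb hQ1 hQ2 w hw.
  assert (hex : exists n, a n <> 0).
  { destruct (hinf 0%nat) as [n [_ hn]]; exists n; exact hn. }
  set (rho := Cmod w * sg).
  set (wn := fun n => pw a t n * (1728 * rho ^ 3 * (exp (xn a t n * (1 / sg)) + exp (xn a t n * - (1 / sg))))).
  assert (hwn : is_series wn (1728 * rho ^ 3 * (Mv a t (1 / sg) + Mv a t (- (1 / sg))))).
  { apply (ser_ext _ _ _ _ (is_series_scal_R _ _ (1728 * rho ^ 3)
      (is_series_plus_R _ _ _ _ (Ms' a hc hex t (1 / sg)) (Ms' a hc hex t (- (1 / sg)))))).
    - intros n. unfold wn. ring.
    - reflexivity. }
  assert (hsum : 1728 * rho ^ 3 * (Mv a t (1 / sg) + Mv a t (- (1 / sg))) <= 3456 * Q * rho ^ 3).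
  { assert (0 <= rho ^ 3) by (apply pow_le; unfold rho; apply Rmult_le_pos; [apply Cmod_ge_0|lra]). nra. }
  destruct w as [al be].
  set (b := Bf a t) in *.
  assert (hre : is_series (fun n => pw a t n * (Re (Cexp (sc (xn a t n) (al, be))) - 1
        - Re (sc (xn a t n) (al, be)) - (Re (sc (xn a t n) (al, be)) ^ 2 - Im (sc (xn a t n) (al, be)) ^ 2) / 2))
        (Gre a t (al, be) - 1 - al * 0 - (al ^ 2 - be ^ 2) / 2 * b)).
  { apply (ser_ext _ _ _ _ (is_series_minus_R _ _ _ _ (is_series_minus_R _ _ _ _
       (is_series_minus_R _ _ _ _ (G_re_series a hc hex t (al, be)) (M0 a hc hex t))
       (is_series_scal_R _ _ al (M1 a hc hex t)))
       (is_series_scal_R _ _ ((al ^ 2 - be ^ 2) / 2) (M2 a hc hex t)))).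
    - intros n. unfold sc, xn; simpl. field.
    - reflexivity. }
  assert (him : is_series (fun n => pw a t n * (Im (Cexp (sc (xn a t n) (al, be)))
        - Im (sc (xn a t n) (al, be)) - Re (sc (xn a t n) (al, be)) * Im (sc (xn a t n) (al, be))))
        (Gim a t (al, be) - be * 0 - al * be * b)).
  { apply (ser_ext _ _ _ _ (is_series_minus_R _ _ _ _
       (is_series_minus_R _ _ _ _ (G_im_series a hc hex t (al, be)) (is_series_scal_R _ _ be (M1 a hc hex t)))
       (is_series_scal_R _ _ (al * be) (M2 a hc hex t)))).
    - intros n. unfold sc, xn; simpl. field.
    - reflexivity. }
  assert (hbd : forall n, 8 * Cmod (sc (xn a t n) (al, be)) ^ 3 * exp (Cmod (sc (xn a t n) (al, be)))
      <= 1728 * rho ^ 3 * (exp (xn a t n * (1 / sg)) + exp (xn a t n * - (1 / sg)))).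
  { intros n. apply term_bound3; auto. }
  assert (b1 := is_series_abs_le _ _ _ _ hre hwn).
  assert (b2 := is_series_abs_le _ _ _ _ him hwn).
  assert (e1 : Rabs (Gre a t (al, be) - 1 - al * 0 - (al ^ 2 - be ^ 2) / 2 * b) <= 3456 * Q * rho ^ 3).
  { eapply Rle_trans; [apply b1|exact hsum]. intros n. cbv beta. unfold wn.
    rewrite Rabs_mult, (Rabs_pos_eq (pw a t n)) by (apply pw_nonneg; auto).
    apply Rmult_le_compat_l; [apply pw_nonneg; auto|].
    eapply Rle_trans; [apply (proj1 (Cexp_taylor3 _))|apply hbd]. }
  assert (e2 : Rabs (Gim a t (al, be) - be * 0 - al * be * b) <= 3456 * Q * rho ^ 3).
  { eapply Rle_trans; [apply b2|exact hsum]. intros n. cbv beta. unfold wn.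
    rewrite Rabs_mult, (Rabs_pos_eq (pw a t n)) by (apply pw_nonneg; auto).
    apply Rmult_le_compat_l; [apply pw_nonneg; auto|].
    eapply Rle_trans; [apply (proj2 (Cexp_taylor3 _))|apply hbd]. }
  eapply Rle_trans; [apply Cmod_le_sum|].
  replace (Re (Gf a t (al, be) - 1 - RtoC (1 / 2) * (al, be) ^ 2 * RtoC b)%C)
    with (Gre a t (al, be) - 1 - al * 0 - (al ^ 2 - be ^ 2) / 2 * b) by (simpl; field).
  replace (Im (Gf a t (al, be) - 1 - RtoC (1 / 2) * (al, be) ^ 2 * RtoC b)%C)
    with (Gim a t (al, be) - be * 0 - al * be * b) by (simpl; field).
  fold rho. lra.
Qed.

Lemma term_lip x w w' sg : 0 < sg -> Cmod w * sg <= 1/6 -> Cmod w' * sg <= 1/6 ->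
  Cmod (Cexp (sc x w') - Cexp (sc x w)) <=
  8 * sg * Cmod (w' - w) * (exp (x * (1 / sg)) + exp (x * - (1 / sg))).
Proof.
  intros hs h1 h2.
  assert (E : (Cexp (sc x w') - Cexp (sc x w) = Cexp (sc x w) * (Cexp (sc x (w' - w)) - 1))%C).
  { replace (sc x w') with (sc x w + sc x (w' - w))%C.
    - rewrite Cexp_add. ring.
    - destruct w, w'; unfold sc; simpl. unfold Cplus; simpl; f_equal; ring. }
  rewrite E, Cmod_mult, Cmod_Cexp.
  assert (t1 := Cexp_taylor1 (sc x (w' - w))).
  rewrite Cmod_sc in t1.
  set (d := Cmod (w' - w)%C) in *.
  assert (hd : d <= Cmod w + Cmod w').
  { unfold d. assert (Cmod (- w) = Cmod w) by apply Cmod_opp.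
    unfold Cminus. eapply Rle_trans; [apply Cmod_triangle|]. lra. }
  assert (hd0 : 0 <= d) by apply Cmod_ge_0.
  assert (hr0 : 0 <= Cmod w) by apply Cmod_ge_0.
  assert (hr1 : 0 <= Cmod w') by apply Cmod_ge_0.
  assert (hre : Re (sc x w) <= Rabs x * Cmod w).
  { simpl. eapply Rle_trans; [apply Rle_abs|]. rewrite Rabs_mult.
    apply Rmult_le_compat_l; [apply Rabs_pos|apply re_le_Cmod]. }
  set (y := Rabs x / sg).
  assert (hy : 0 <= y) by (unfold y; apply Rdiv_le_0_compat; [apply Rabs_pos|lra]).
  assert (hx : Rabs x = y * sg) by (unfold y; field; lra).
  assert (hexp : Re (sc x w) + Rabs x * d <= y / 2).
  { rewrite hx in hre |- *.
    assert (y * sg * Cmod w <= y * (1/6)) by nra.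
    assert (sg * d <= 2/6) by nra.
    assert (y * sg * d <= y * (2/6)) by nra.
    lra. }
  assert (hab : exp y <= exp (x * (1 / sg)) + exp (x * - (1 / sg))).
  { replace y with (Rabs (x * (1 / sg))).
    - replace (x * - (1 / sg)) with (- (x * (1 / sg))) by ring. apply exp_abs_le.
    - unfold y. rewrite Rabs_mult, (Rabs_pos_eq (1 / sg)) by (apply Rlt_le, Rdiv_lt_0_compat; lra).
      field; lra. }
  assert (hl := lin_exp y hy).
  assert (hE : exp (Re (sc x w)) * exp (Rabs x * d) <= exp (y / 2)).
  { rewrite <- exp_plus. destruct (Rle_lt_or_eq_dec _ _ hexp) as [h|h].
    - left; apply exp_increasing; exact h.
    - right; rewrite h; reflexivity. }
  assert (0 < exp (Re (sc x w))) by apply exp_pos.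
  assert (0 < exp (Rabs x * d)) by apply exp_pos.
  assert (0 < exp (y / 2)) by apply exp_pos.
  eapply Rle_trans.
  { apply Rmult_le_compat_l; [lra|exact t1]. }
  rewrite hx.
  replace (exp (Re (sc x w)) * (4 * (y * sg * d) * exp (y * sg * d)))
    with (4 * sg * d * y * (exp (Re (sc x w)) * exp (Rabs x * d))) by (rewrite hx; ring).
  assert (0 <= 4 * sg * d * y) by (apply Rmult_le_pos; [nra|lra]).
  assert (4 * sg * d * y * (exp (Re (sc x w)) * exp (Rabs x * d)) <= 4 * sg * d * (y * exp (y / 2))).
  { replace (4 * sg * d * (y * exp (y / 2))) with (4 * sg * d * y * exp (y / 2)) by ring.
    apply Rmult_le_compat_l; lra. }
  assert (0 <= 4 * sg * d) by nra.
  assert (4 * sg * d * (y * exp (y / 2)) <= 4 * sg * d * (2 * exp y)) by (apply Rmult_le_compat_l; lra).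
  assert (4 * sg * d * (2 * exp y) <= 8 * sg * d * (exp (x * (1 / sg)) + exp (x * - (1 / sg)))) by nra.
  lra.
Qed.

Lemma core_B a (hc : CV_radius (coefG a) = p_infty)
  (hinf : forall N : nat, exists n, (N <= n)%nat /\ a n <> 0) t sg Q :
  0 < sg -> Mv a t (1 / sg) <= Q -> Mv a t (- (1 / sg)) <= Q ->
  forall w w', Cmod w * sg <= 1/6 -> Cmod w' * sg <= 1/6 ->
  Cmod (Gf a t w' - Gf a t w) <= 32 * sg * Q * Cmod (w' - w).
Proof.
  intros hs hQ1 hQ2 w w' h1 h2.
  assert (hex : exists n, a n <> 0).
  { destruct (hinf 0%nat) as [n [_ hn]]; exists n; exact hn. }
  set (d := Cmod (w' - w)%C).
  set (wn := fun n => pw a t n * (8 * sg * d * (exp (xn a t n * (1 / sg)) + exp (xn a t n * - (1 / sg))))).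
  assert (hwn : is_series wn (8 * sg * d * (Mv a t (1 / sg) + Mv a t (- (1 / sg))))).
  { apply (ser_ext _ _ _ _ (is_series_scal_R _ _ (8 * sg * d)
      (is_series_plus_R _ _ _ _ (Ms' a hc hex t (1 / sg)) (Ms' a hc hex t (- (1 / sg)))))).
    - intros n. unfold wn. ring.
    - reflexivity. }
  assert (hsum : 8 * sg * d * (Mv a t (1 / sg) + Mv a t (- (1 / sg))) <= 16 * sg * Q * d).
  { assert (0 <= d) by apply Cmod_ge_0. assert (0 <= 8 * sg * d) by nra. nra. }
  assert (hbd := fun n => term_lip (xn a t n) w w' sg hs h1 h2).
  fold d in hbd.
  assert (hre := is_series_minus_R _ _ _ _ (G_re_series a hc hex t w') (G_re_series a hc hex t w)).
  assert (him := is_series_minus_R _ _ _ _ (G_im_series a hc hex t w') (G_im_series a hc hex t w)).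
  assert (e1 : Rabs (Gre a t w' - Gre a t w) <= 16 * sg * Q * d).
  { eapply Rle_trans; [apply (is_series_abs_le _ _ _ _ hre hwn)|exact hsum]. intros n. cbv beta. unfold wn.
    rewrite <- Rmult_minus_distr_l.
    rewrite Rabs_mult, (Rabs_pos_eq (pw a t n)) by (apply pw_nonneg; auto).
    apply Rmult_le_compat_l; [apply pw_nonneg; auto|].
    eapply Rle_trans; [|apply hbd].
    apply (re_le_Cmod (Cexp (sc (xn a t n) w') - Cexp (sc (xn a t n) w))%C). }
  assert (e2 : Rabs (Gim a t w' - Gim a t w) <= 16 * sg * Q * d).
  { eapply Rle_trans; [apply (is_series_abs_le _ _ _ _ him hwn)|exact hsum]. intros n. cbv beta. unfold wn.
    rewrite <- Rmult_minus_distr_l.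
    rewrite Rabs_mult, (Rabs_pos_eq (pw a t n)) by (apply pw_nonneg; auto).
    apply Rmult_le_compat_l; [apply pw_nonneg; auto|].
    eapply Rle_trans; [|apply hbd].
    apply (im_le_Cmod' (Cexp (sc (xn a t n) w') - Cexp (sc (xn a t n) w))%C). }
  eapply Rle_trans; [apply Cmod_le_sum|].
  change (Rabs (Gre a t w' - Gre a t w) + Rabs (Gim a t w' - Gim a t w) <= 32 * sg * Q * d).
  lra.
Qed.

Lemma pow_n_Cexp (z : C) (n : nat) :
  pow_n (K := C_AbsRing) (Cexp z) n = Cexp (RtoC (INR n) * z).
Proof.
  induction n as [|n IH].
  - simpl. replace (RtoC 0 * z)%C with (RtoC 0) by ring. rewrite Cexp_RtoC, exp_0. reflexivity.
  - change (pow_n (K := C_AbsRing) (Cexp z) (S n)) with (Cexp z * pow_n (K := C_AbsRing) (Cexp z) n)%C.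
    rewrite IH, <- Cexp_add. f_equal. rewrite S_INR, RtoC_plus. ring.
Qed.

Lemma term_eq (c e H A t x n : R) (w : C) : H <> 0 -> x = n - A -> e = exp (n * t) ->
  ((RtoC H * Cexp (w * RtoC A)) * (RtoC (c * e / H) * Cexp (sc x w)))%C =
  (Cexp (RtoC n * (RtoC t + w)) * RtoC c)%C.
Proof.
  intros hH hx he.
  assert (E1 : Cexp (RtoC n * (RtoC t + w)) = (Cexp (RtoC (n * t)) * (Cexp (w * RtoC A) * Cexp (sc x w)))%C).
  { rewrite <- !Cexp_add. f_equal. destruct w as [u v]. subst x.
    unfold sc, RtoC, Cmult, Cplus; simpl. f_equal; ring. }
  rewrite E1, Cexp_RtoC, <- he.
  assert (E2 : RtoC (c * e / H) = (RtoC c * RtoC e * RtoC (/ H))%C).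
  { unfold Rdiv. rewrite !RtoC_mult. reflexivity. }
  assert (E3 : (RtoC H * RtoC (/ H))%C = 1%C).
  { rewrite <- RtoC_mult, Rinv_r by exact hH. reflexivity. }
  rewrite E2.
  transitivity ((RtoC H * RtoC (/ H)) * (RtoC c * RtoC e * Cexp (w * RtoC A) * Cexp (sc x w)))%C.
  - ring.
  - rewrite E3. ring.
Qed.

Lemma Cmod_half_w2b (w : C) (b : R) : 0 <= b ->
  Cmod (RtoC (1/2) * w ^ 2 * RtoC b)%C = 1/2 * Cmod w ^ 2 * b.
Proof.
  intros hb. rewrite !Cmod_mult, Cmod_pow, !Cmod_R.
  rewrite (Rabs_pos_eq (1/2)) by lra. rewrite (Rabs_pos_eq b) by lra. reflexivity.
Qed.

Lemma Re_ge_of_near1 (z : C) : Cmod (z - 1) <= 1/4 -> 0 < Re z.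
Proof.
  intros h. assert (H := re_le_Cmod (z - 1)%C). destruct z as [x y]. simpl in H.
  apply Rabs_le_between in H. simpl. lra.
Qed.

Theorem proposition3p9
  (a : nat -> R)
  (ha_nonneg : forall n, 0 <= a n)
  (ha_inf : forall N : nat, exists n, (N <= n)%nat /\ a n <> 0)
  (hG_entire : CV_radius (coefG a) = p_infty)
  (hB_mono : forall s t, s <= t -> Bf a s <= Bf a t)
  (hB_unbdd : forall M, exists t, M < Bf a t)
  (tl : nat -> R) (l0 : nat)
  (htl_val : forall l, (l0 <= l)%nat -> Bf a (tl l) = (INR l) ^ 6)
  (htl_incr : forall l, (l0 <= l)%nat -> tl l < tl (S l))
  (htl_first : forall l, (l < l0)%nat -> forall t, Bf a t <> (INR l) ^ 6) :
  forall eps : R, 0 < eps ->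
  exists eta : R, 0 < eta /\
  exists t0 : R,
  forall t : R, normal_values tl l0 t -> t0 < t ->
  let disk := fun w : C => Cmod w <= eta / sqrt (Bf a t) in
  exists L : C -> C,
    L 0%C = 0%C /\
    forall w : C, disk w ->
      filterlim L (within disk (locally w)) (locally (L w)) /\
      is_pseries (fun n => RtoC (coefG a n)) (Cexp (RtoC t + w))
                 (Cmult (RtoC (Hf a t)) (Cexp (L w))) /\
      Cmod (L w - (w * RtoC (Af a t) + RtoC (1/2) * w ^ 2 * RtoC (Bf a t)))
        <= eps * (Cmod w) ^ 2 * Bf a t.
Proof.
  intros eps heps.
  set (hc := hG_entire).
  assert (hex : exists n, a n <> 0).
  { destruct (ha_inf 0%nat) as [n [_ hn]]; exists n; exact hn. }
  set (Q := exp 64).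
  assert (hQ : 1 <= Q) by (unfold Q; assert (H := exp_ineq1_le 64); lra).
  set (K := 6912 * Q).
  assert (hK : 1 <= K) by (unfold K; lra).
  set (eta := Rmin (Rmin (1/6) (eps/24)) (Rmin (eps / (2 * K)) (1 / (2 * K)))).
  assert (he1 : eta <= 1/6) by (unfold eta; eapply Rle_trans; [apply Rmin_l|apply Rmin_l]).
  assert (he2 : eta <= eps/24) by (unfold eta; eapply Rle_trans; [apply Rmin_l|apply Rmin_r]).
  assert (he3 : eta <= eps / (2 * K)) by (unfold eta; eapply Rle_trans; [apply Rmin_r|apply Rmin_l]).
  assert (he4 : eta <= 1 / (2 * K)) by (unfold eta; eapply Rle_trans; [apply Rmin_r|apply Rmin_r]).
  assert (hpos : 0 < eta).
  { unfold eta. repeat apply Rmin_pos; try lra; apply Rdiv_lt_0_compat; lra. }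
  assert (hKe3 : K * eta <= eps / 2).
  { assert (K * eta <= K * (eps / (2 * K))) by (apply Rmult_le_compat_l; lra).
    replace (K * (eps / (2 * K))) with (eps / 2) in H by (field; lra). exact H. }
  assert (hKe4 : K * eta <= 1 / 2).
  { assert (K * eta <= K * (1 / (2 * K))) by (apply Rmult_le_compat_l; lra).
    replace (K * (1 / (2 * K))) with (1 / 2) in H by (field; lra). exact H. }
  exists eta. split; [exact hpos|]. exists 0. intros t hnv _ disk.
  destruct hnv as [l [hl0 [_ [hi1 hi2]]]].
  assert (hl1 : (1 <= l)%nat).
  { destruct l as [|l']; [|lia].
    exfalso. assert (l0 = 0%nat) by lia. subst l0.
    specialize (htl_val 0%nat (le_n 0)). simpl in htl_val.
    assert (H := Bf_pos a hc ha_inf (tl 0%nat)). lra. }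
  set (Ll := INR l) in *.
  assert (hL : 1 <= Ll) by (unfold Ll; apply (le_INR 1); exact hl1).
  assert (hL2 : 0 < 2 / Ll ^ 2) by (apply Rdiv_lt_0_compat; [lra|apply pow_lt; lra]).
  set (b := Bf a t) in *.
  assert (hbL : Ll ^ 6 <= b).
  { unfold b. replace (Ll ^ 6) with (Bf a (tl l)) by (rewrite (htl_val l hl0); reflexivity). apply hB_mono. lra. }
  assert (hL6 : 1 <= Ll ^ 6) by (apply pow_R1_Rle; lra).
  assert (hb1 : 1 <= b) by lra.
  set (sg := sqrt b).
  assert (hsg2 : sg ^ 2 = b) by (unfold sg; rewrite pow2_sqrt; lra).
  assert (hsgL : Ll ^ 3 <= sg).
  { unfold sg. rewrite <- (sqrt_pow2 (Ll ^ 3)) by (apply pow_le; lra).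
    apply sqrt_le_1_alt. replace ((Ll ^ 3) ^ 2) with (Ll ^ 6) by ring. exact hbL. }
  assert (hL3 : 1 <= Ll ^ 3) by (apply pow_R1_Rle; lra).
  assert (hsg : 0 < sg) by lra.
  assert (hBn : forall x, Rabs x <= 1 / sg -> Bf a (t + x) <= 64 * b).
  { intros x hx.
    assert (h1 : 1 / sg <= 1 / Ll ^ 3) by (apply Rmult_le_compat_l; [lra|apply Rinv_le_contravar; lra]).
    assert (h2 : 1 / Ll ^ 3 <= 2 / Ll ^ 2).
    { unfold Rdiv. assert (/ Ll ^ 3 <= / Ll ^ 2).
      { apply Rinv_le_contravar; [apply pow_lt; lra|]. replace (Ll ^ 3) with (Ll * Ll ^ 2) by ring.
        assert (0 < Ll ^ 2) by (apply pow_lt; lra). nra. }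
      assert (0 < / Ll ^ 2) by (apply Rinv_0_lt_compat, pow_lt; lra). lra. }
    apply Rabs_le_between in hx.
    assert (hle : t + x <= tl (S l)) by lra.
    eapply Rle_trans; [apply hB_mono; exact hle|].
    rewrite (htl_val (S l)) by lia. rewrite S_INR. fold Ll.
    assert ((Ll + 1) ^ 6 <= (2 * Ll) ^ 6) by (apply pow_incr; lra).
    replace ((2 * Ll) ^ 6) with (64 * Ll ^ 6) in H by ring. lra. }
  assert (hM : forall s, Rabs s <= 1 / sg -> Mv a t s <= exp (64 * b * s ^ 2)).
  { intros s hs. unfold Mv. apply (mgf_bound a hc ha_inf t (64 * b) (1 / sg)); auto. }
  assert (hsq : 64 * b * (1 / sg) ^ 2 = 64) by (rewrite <- hsg2; field; lra).
  assert (hQ1 : Mv a t (1 / sg) <= Q).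
  { unfold Q. rewrite <- hsq. apply hM. rewrite Rabs_pos_eq; [lra|]. apply Rlt_le, Rdiv_lt_0_compat; lra. }
  assert (hQ2 : Mv a t (- (1 / sg)) <= Q).
  { unfold Q. rewrite <- hsq. replace ((1 / sg) ^ 2) with ((- (1 / sg)) ^ 2) by ring.
    apply hM. rewrite Rabs_Ropp, Rabs_pos_eq; [lra|]. apply Rlt_le, Rdiv_lt_0_compat; lra. }
  assert (hA := core_A a hc ha_inf t sg Q hsg hsg2 hQ1 hQ2).
  assert (hB := core_B a hc ha_inf t sg Q hsg hQ1 hQ2).
  fold b in hA.
  assert (hdisk : forall w, disk w -> Cmod w * sg <= eta).
  { intros w hw. unfold disk in hw. fold b sg in hw.
    apply (Rmult_le_compat_r sg) in hw; [|lra]. replace (eta / sg * sg) with eta in hw by (field; lra). exact hw. }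
  assert (hG1 : forall w, disk w -> Cmod (Gf a t w - 1) <= (Cmod w * sg) ^ 2).
  { intros w hw. assert (hr := hdisk w hw).
    assert (hr0 : 0 <= Cmod w * sg) by (apply Rmult_le_pos; [apply Cmod_ge_0|lra]).
    specialize (hA w ltac:(lra)).
    assert (hh := Cmod_half_w2b w b ltac:(lra)).
    assert (E : (Gf a t w - 1 = (Gf a t w - 1 - RtoC (1/2) * w ^ 2 * RtoC b) + RtoC (1/2) * w ^ 2 * RtoC b)%C) by ring.
    rewrite E. eapply Rle_trans; [apply Cmod_triangle|]. rewrite hh.
    replace (1 / 2 * Cmod w ^ 2 * b) with (1/2 * (Cmod w * sg) ^ 2) by (rewrite <- hsg2; ring).
    set (rho := Cmod w * sg) in *.
    assert (K * rho <= 1/2) by (eapply Rle_trans; [|exact hKe4]; apply Rmult_le_compat_l; lra).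
    assert (K * rho ^ 3 <= 1/2 * rho ^ 2) by (replace (K * rho ^ 3) with ((K * rho) * rho ^ 2) by ring;
      apply Rmult_le_compat_r; [nra|lra]).
    fold K in hA. lra. }
  assert (hG14 : forall w, disk w -> Cmod (Gf a t w - 1) <= 1/4).
  { intros w hw. eapply Rle_trans; [apply hG1; exact hw|].
    assert (0 <= Cmod w * sg) by (apply Rmult_le_pos; [apply Cmod_ge_0|lra]).
    assert (Cmod w * sg <= 1/6) by (specialize (hdisk w hw); lra). nra. }
  exists (fun w => (w * RtoC (Af a t) + Clog (Gf a t w))%C).
  split.
  -
    assert (hz : Gf a t 0%C = 1%C).
    { assert (h := hA 0%C ltac:(rewrite Cmod_0; lra)).
      rewrite Cmod_0, Rmult_0_l in h. 
      assert (h0 : Cmod (Gf a t 0 - 1 - RtoC (1 / 2) * 0 ^ 2 * RtoC b)%C = 0).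
      { apply Rle_antisym; [|apply Cmod_ge_0]. eapply Rle_trans; [exact h|]. right; ring. }
      apply Cmod_eq_0 in h0.
      replace (Gf a t 0%C) with ((Gf a t 0 - 1 - RtoC (1 / 2) * 0 ^ 2 * RtoC b) + 1 + RtoC (1 / 2) * 0 ^ 2 * RtoC b)%C by ring.
      rewrite h0. ring. }
    rewrite hz, Clog_1. ring.
  - intros w hw.
    assert (hr := hdisk w hw).
    assert (hr0 : 0 <= Cmod w * sg) by (apply Rmult_le_pos; [apply Cmod_ge_0|lra]).
    split; [|split].
    +
      apply (lip_within (fun w => (w * RtoC (Af a t) + Clog (Gf a t w))%C) disk w (Rabs (Af a t) + 5 * (32 * sg * Q))).
      { assert (0 <= Rabs (Af a t)) by apply Rabs_pos. nra. }
      intros w' hw'.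
      assert (E : ((w' * RtoC (Af a t) + Clog (Gf a t w')) - (w * RtoC (Af a t) + Clog (Gf a t w))
          = (w' - w) * RtoC (Af a t) + (Clog (Gf a t w') - Clog (Gf a t w)))%C) by ring.
      rewrite E. eapply Rle_trans; [apply Cmod_triangle|].
      rewrite Cmod_mult, Cmod_R.
      assert (h1 := Clog_lip _ _ (hG14 w' hw') (hG14 w hw)).
      assert (h2 := hB w w' ltac:(lra) ltac:(specialize (hdisk w' hw'); lra)).
      assert (0 <= Cmod (w' - w)) by apply Cmod_ge_0.
      assert (0 <= Rabs (Af a t)) by apply Rabs_pos.
      nra.
    +
      assert (hH := Hf_pos a hc hex t).
      unfold is_pseries.
      assert (hs := is_series_scal (K := C_AbsRing) (V := C_NormedModule)
          (RtoC (Hf a t) * Cexp (w * RtoC (Af a t)))%C _ _ (G_C_series a hc hex t w)).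
      replace (RtoC (Hf a t) * Cexp (w * RtoC (Af a t) + Clog (Gf a t w)))%C
        with (scal (K := C_AbsRing) (RtoC (Hf a t) * Cexp (w * RtoC (Af a t)))%C (Gf a t w)).
      * eapply is_series_ext; [|exact hs].
        intros n. change (scal (K := C_AbsRing) ?x ?y) with (Cmult x y).
        rewrite pow_n_Cexp. unfold pw.
        apply term_eq; [lra|reflexivity|].
        rewrite exp_INR_mul. reflexivity.
      * change (scal (K := C_AbsRing) ?x ?y) with (Cmult x y).
        rewrite Cexp_add, Cexp_Clog by (apply Re_ge_of_near1; apply hG14; exact hw). symmetry; apply Cmult_assoc.
    +
      set (u := (Gf a t w - 1)%C).
      assert (hu1 : Cmod u <= (Cmod w * sg) ^ 2) by (apply hG1; exact hw).
      assert (hu4 : Cmod u <= 1/4) by (apply hG14; exact hw).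
      assert (hq := Clog_quad u hu4).
      assert (hAw := hA w ltac:(lra)). fold u in hAw. fold K in hAw.
      replace (Gf a t w) with (1 + u)%C by (unfold u; ring).
      assert (E : ((w * RtoC (Af a t) + Clog (1 + u)) - (w * RtoC (Af a t) + RtoC (1 / 2) * w ^ 2 * RtoC b)
          = (Clog (1 + u) - u) + (u - RtoC (1 / 2) * w ^ 2 * RtoC b))%C) by ring.
      rewrite E. eapply Rle_trans; [apply Cmod_triangle|].
      replace (eps * Cmod w ^ 2 * b) with (eps * (Cmod w * sg) ^ 2) by (rewrite <- hsg2; ring).
      set (rho := Cmod w * sg) in *.
      assert (h1 : 12 * Cmod u ^ 2 <= eps / 12 * rho ^ 2).
      { assert (0 <= Cmod u) by apply Cmod_ge_0.
        assert (Cmod u ^ 2 <= rho ^ 4) by (replace (rho ^ 4) with ((rho ^ 2) ^ 2) by ring; apply pow_incr; lra).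
        assert (rho ^ 4 <= eta ^ 2 * rho ^ 2).
        { replace (rho ^ 4) with (rho ^ 2 * rho ^ 2) by ring.
          apply Rmult_le_compat_r; [nra|]. apply pow_incr; lra. }
        assert (eta ^ 2 <= eps / 144) by nra.
        assert (0 <= rho ^ 2) by nra.
        nra. }
      assert (h2 : K * rho ^ 3 <= eps / 2 * rho ^ 2).
      { replace (K * rho ^ 3) with ((K * rho) * rho ^ 2) by ring.
        apply Rmult_le_compat_r; [nra|]. eapply Rle_trans; [|exact hKe3].
        apply Rmult_le_compat_l; lra. }
      assert (0 <= rho ^ 2) by nra.
      assert (0 <= eps * rho ^ 2) by nra. lra.
Qed.
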